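(* Let $(u,\phi,\theta,\eta)$ be a solution of the system $\rho u_{tt}=\mu u_{xx}+b\phi_x$, $J\phi_{tt}=\alpha\phi_{xx}-bu_x-\xi\phi-\beta\theta_x$, $c\theta_t=-\beta\phi_{xt}+\int_0^\infty\kappa(s)\eta_{xx}(x,s)ds$, $\eta_t=\theta-\eta_s$ on $(0,\pi)\times(0,\infty)$ with boundary conditions $u=\phi_x=\theta=0$ at $x=0,\pi$, $\eta(0,s)=\eta(\pi,s)=0$, $\eta(x,0)=0$. Then the functional \[ F_1(t)=-\frac{2c}{g(0)}\int_0^{+\infty}\kappa(s)\langle\theta(t),\eta^t(s)\rangle ds \] satisfies, for every $\varepsilon_1>0$, \[ \frac{d}{dt}F_1(t)\le-c\|\theta\|^2-\|\eta\|_{\mathcal V}^2+\varepsilon_1\|\phi_t\|^2-M\Big(1+\frac1{\varepsilon_1}\Big)\int_0^{+\infty}\kappa'(s)\|\eta_x(s)\|^2ds, \] where $M>0$ is a constant independent of $\varepsilon_1$.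
   Context: $\rho,J,c,\mu,b,\alpha,\xi$ are positive constants with $\mu\xi>b^2$; $\beta\ne0$ real. $\kappa$ satisfies (h1) $\kappa\in C([0,\infty))\cap L^1(0,\infty)$; (h2) $\kappa>0$, $\kappa'\le0$; (h3) $g(0):=\int_0^\infty\kappa(s)ds$; (h4) $\kappa'\le-\delta\kappa$ for some $\delta>0$. $\eta=\eta^t(x,s)=\int_0^s\theta(x,t-\tau)d\tau$. $\langle\cdot,\cdot\rangle,\|\cdot\|$ are the $L^2(0,\pi)$ inner product and norm; $\|\eta\|_{\mathcal V}^2=\int_0^\infty\kappa(s)\|\eta_x(s)\|^2ds$. Solutions are sufficiently regular (strong) solutions so that differentiation is legitimate. *)

(* Defs.v *)
From Stdlib Require Import Reals.
From Coquelicot Require Import Coquelicot.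
Open Scope R_scope.

Definition Iinf (f : R -> R) : R :=
  RInt_gen f (at_point 0) (Rbar_locally p_infty).

Definition ip (f g : R -> R) : R := RInt (fun x => f x * g x) 0 PI.
Definition nrm2 (f : R -> R) : R := ip f f.

Definition dx (f : R -> R -> R) : R -> R -> R :=
  fun x t => Derive (fun y => f y t) x.
Definition dt (f : R -> R -> R) : R -> R -> R :=
  fun x t => Derive (fun y => f x y) t.

Definition dx3 (f : R -> R -> R -> R) : R -> R -> R -> R :=
  fun x s t => Derive (fun y => f y s t) x.
Definition ds3 (f : R -> R -> R -> R) : R -> R -> R -> R :=
  fun x s t => Derive (fun y => f x y t) s.
Definition dt3 (f : R -> R -> R -> R) : R -> R -> R -> R :=
  fun x s t => Derive (fun y => f x s y) t.

Definition cont2 (f : R -> R -> R) : Prop :=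
  forall x t, continuous (fun p : R * R => f (fst p) (snd p)) (x, t).
Definition cont3 (f : R -> R -> R -> R) : Prop :=
  forall x s t, continuous (fun p : R * R * R => f (fst (fst p)) (snd (fst p)) (snd p)) (x, s, t).

Definition C2 (f : R -> R -> R) : Prop :=
  (forall x t, ex_derive (fun y => f y t) x) /\
  (forall x t, ex_derive (fun y => f x y) t) /\
  (forall x t, ex_derive (fun y => dx f y t) x) /\
  (forall x t, ex_derive (fun y => dx f x y) t) /\
  (forall x t, ex_derive (fun y => dt f y t) x) /\
  (forall x t, ex_derive (fun y => dt f x y) t) /\
  cont2 f /\ cont2 (dx f) /\ cont2 (dt f) /\
  cont2 (dx (dx f)) /\ cont2 (dt (dx f)) /\
  cont2 (dx (dt f)) /\ cont2 (dt (dt f)).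

(* regularity of the memory variable eta(x,s,t) = eta^t(x,s) *)
Definition eta_regular (eta : R -> R -> R -> R) : Prop :=
  (forall x s t, ex_derive (fun y => eta y s t) x) /\
  (forall x s t, ex_derive (fun y => dx3 eta y s t) x) /\
  (forall x s t, ex_derive (fun y => eta x y t) s) /\
  (forall x s t, ex_derive (fun y => eta x s y) t) /\
  cont3 eta /\ cont3 (dx3 eta) /\ cont3 (dx3 (dx3 eta)) /\
  cont3 (ds3 eta) /\ cont3 (dt3 eta) /\
  (forall T, 0 < T -> exists B, forall x s t,
     0 <= x <= PI -> 0 <= s -> 0 < t <= T ->
     Rabs (eta x s t) <= B * (1 + s) /\
     Rabs (dx3 eta x s t) <= B * (1 + s) /\
     Rabs (dx3 (dx3 eta) x s t) <= B * (1 + s) /\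
     Rabs (ds3 eta x s t) <= B * (1 + s) /\
     Rabs (dt3 eta x s t) <= B * (1 + s)).

Definition is_solution (rho J c mu b alpha xi beta : R) (kappa : R -> R)
  (u phi theta : R -> R -> R) (eta : R -> R -> R -> R) : Prop :=
  C2 u /\ C2 phi /\ C2 theta /\ eta_regular eta /\
  (forall x t, 0 < x < PI -> 0 < t ->
     rho * dt (dt u) x t = mu * dx (dx u) x t + b * dx phi x t) /\
  (forall x t, 0 < x < PI -> 0 < t ->
     J * dt (dt phi) x t = alpha * dx (dx phi) x t - b * dx u x t
                           - xi * phi x t - beta * dx theta x t) /\
  (forall x t, 0 < x < PI -> 0 < t ->
     c * dt theta x t = - beta * dt (dx phi) x t
                        + Iinf (fun s => kappa s * dx3 (dx3 eta) x s t)) /\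
  (forall x s t, 0 < x < PI -> 0 < s -> 0 < t ->
     dt3 eta x s t = theta x t - ds3 eta x s t) /\
  (forall t, 0 < t ->
     u 0 t = 0 /\ u PI t = 0 /\ dx phi 0 t = 0 /\ dx phi PI t = 0 /\
     theta 0 t = 0 /\ theta PI t = 0) /\
  (forall s t, 0 <= s -> 0 < t -> eta 0 s t = 0 /\ eta PI s t = 0) /\
  (forall x t, 0 < t -> eta x 0 t = 0).

(* hypotheses (h1)-(h4) on the kernel; kappa is taken C^1 on [0,oo)
   so that kappa' makes sense *)
Definition kernel_hyp (kappa : R -> R) (delta : R) : Prop :=
  (forall s, 0 <= s -> ex_derive kappa s) /\
  (forall s, 0 <= s -> continuous (Derive kappa) s) /\
  ex_RInt_gen kappa (at_point 0) (Rbar_locally p_infty) /\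
  (forall s, 0 <= s -> 0 < kappa s) /\
  (forall s, 0 <= s -> Derive kappa s <= 0) /\
  0 < delta /\
  (forall s, 0 <= s -> Derive kappa s <= - delta * kappa s).

Definition g0 (kappa : R -> R) : R := Iinf kappa.

Definition F1 (c : R) (kappa : R -> R) (theta : R -> R -> R)
  (eta : R -> R -> R -> R) (t : R) : R :=
  - (2 * c / g0 kappa) *
    Iinf (fun s => kappa s * ip (fun x => theta x t) (fun x => eta x s t)).

Definition normV2 (kappa : R -> R) (eta : R -> R -> R -> R) (t : R) : R :=
  Iinf (fun s => kappa s * nrm2 (fun x => dx3 eta x s t)).

(* Main.v *)
Require Import Defs.
From Stdlib Require Import Reals.
From Coquelicot Require Import Coquelicot.
From Stdlib Require Import Lra Classical ClassicalEpsilon.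
Open Scope R_scope.


Lemma ball_R (x e y : R) : ball x e y <-> Rabs (y - x) < e.
Proof. reflexivity. Qed.

Lemma tube {P : UniformSpace} (F : R -> P -> R) (a b : R) (p0 : P) :
  (forall x, a <= x <= b -> continuous (fun z : R * P => F (fst z) (snd z)) (x, p0)) ->
  forall eps : posreal, locally p0 (fun p => forall x, a <= x <= b -> Rabs (F x p - F x p0) < eps).
Proof.
  intros Hc eps.
  assert (He2 : 0 < eps / 2) by (destruct eps; simpl; lra).
  assert (Hex : forall x, exists e : posreal, a <= x <= b ->
     forall z : R * P, ball (x, p0) e z -> Rabs (F (fst z) (snd z) - F x p0) < eps / 2).
  { intros x. destruct (classic (a <= x <= b)) as [Hx|Hx].
    - specialize (Hc x Hx). apply filterlim_locally with (eps := mkposreal _ He2) in Hc.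
      destruct Hc as [e He]. exists e. intros _ z Hz. apply He. exact Hz.
    - exists (mkposreal 1 Rlt_0_1). intros H; contradiction. }
  set (dl := fun x => proj1_sig (constructive_indefinite_description _ (Hex x))).
  assert (Hdl : forall x, a <= x <= b -> forall z : R * P, ball (x, p0) (dl x) z ->
      Rabs (F (fst z) (snd z) - F x p0) < eps / 2).
  { intros x. unfold dl. destruct (constructive_indefinite_description _ (Hex x)) as [e He]. exact He. }
  assert (Hpos : forall x, 0 < dl x / 2) by (intros x; destruct (dl x); simpl; lra).
  destruct (compactness_value_1d a b (fun x => mkposreal _ (Hpos x))) as [d Hd].
  exists d. intros p Hp x Hx.
  specialize (Hd x Hx). simpl in Hd.
  apply NNPP. intros Hn. apply Hd. intros [u [Hu [Hxu Hdu]]].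
  apply Hn.
  assert (H1 : Rabs (F x p - F u p0) < eps / 2).
  { apply (Hdl u Hu (x, p)). split; simpl.
    - apply ball_R. pose proof (Hpos u). lra.
    - apply ball_le with d; [pose proof (Hpos u); lra | exact Hp]. }
  assert (H2 : Rabs (F x p0 - F u p0) < eps / 2).
  { apply (Hdl u Hu (x, p0)). split; simpl.
    - apply ball_R. pose proof (Hpos u). lra.
    - apply ball_center. }
  replace (F x p - F x p0) with ((F x p - F u p0) - (F x p0 - F u p0)) by ring.
  eapply Rle_lt_trans. apply Rabs_triang. rewrite Rabs_Ropp.
  destruct eps; simpl in *; lra.
Qed.


Definition jcont {P : UniformSpace} (F : R -> P -> R) :=
  forall x p, continuous (fun z : R * P => F (fst z) (snd z)) (x, p).

Lemma jcont_1 {P : UniformSpace} (F : R -> P -> R) p x : jcont F -> continuous (fun y => F y p) x.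
Proof.
  intros H. apply (continuous_comp (fun y => (y, p)) (fun z : R * P => F (fst z) (snd z))).
  - apply (continuous_comp_2 (fun y : R => y) (fun _ => p) pair).
    apply continuous_id. apply continuous_const.
    intros Q [e He]. exists e. intros y Hy. apply He. exact Hy.
  - apply H.
Qed.

Lemma jcont_ex_RInt {P : UniformSpace} (F : R -> P -> R) p a b : jcont F -> ex_RInt (fun y => F y p) a b.
Proof. intros H. apply (ex_RInt_continuous (V := R_CompleteNormedModule)). intros z _. apply jcont_1. exact H. Qed.

Lemma RInt_minusR (f g : R -> R) a b : ex_RInt f a b -> ex_RInt g a b ->
  RInt (fun x => f x - g x) a b = RInt f a b - RInt g a b.
Proof. intros. apply (RInt_minus f g); assumption. Qed.
Lemma RInt_plusR (f g : R -> R) a b : ex_RInt f a b -> ex_RInt g a b ->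
  RInt (fun x => f x + g x) a b = RInt f a b + RInt g a b.
Proof. intros. apply (RInt_plus f g); assumption. Qed.
Lemma RInt_scalR (f : R -> R) a b k : ex_RInt f a b ->
  RInt (fun x => k * f x) a b = k * RInt f a b.
Proof. intros. apply (RInt_scal f); assumption. Qed.
Lemma ex_RInt_minusR (f g : R -> R) a b : ex_RInt f a b -> ex_RInt g a b ->
  ex_RInt (fun x => f x - g x) a b.
Proof. intros. apply (ex_RInt_minus f g); assumption. Qed.
Lemma ex_RInt_plusR (f g : R -> R) a b : ex_RInt f a b -> ex_RInt g a b ->
  ex_RInt (fun x => f x + g x) a b.
Proof. intros. apply (ex_RInt_plus f g); assumption. Qed.
Lemma ex_RInt_scalR (f : R -> R) a b k : ex_RInt f a b ->
  ex_RInt (fun x => k * f x) a b.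
Proof. intros. apply (ex_RInt_scal f); assumption. Qed.
Lemma ex_RInt_contR (f : R -> R) a b : (forall z, Rmin a b <= z <= Rmax a b -> continuous f z) ->
  ex_RInt f a b.
Proof. intros. apply (ex_RInt_continuous (V := R_CompleteNormedModule)); assumption. Qed.

Lemma RInt_extR (f g : R -> R) a b : (forall x, Rmin a b < x < Rmax a b -> f x = g x) ->
  RInt f a b = RInt g a b.
Proof. intros. apply RInt_ext. assumption. Qed.

Lemma param_cont {P : UniformSpace} (F : R -> P -> R) a b p0 : a <= b -> jcont F ->
  continuous (fun p => RInt (fun x => F x p) a b) p0.
Proof.
  intros Hab HF. apply filterlim_locally. intros eps.
  assert (Hp : 0 < eps / (b - a + 1)) by (apply Rdiv_lt_0_compat; [apply cond_pos | lra]).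
  destruct (tube F a b p0 (fun x _ => HF x p0) (mkposreal _ Hp)) as [d Hd].
  exists d. intros p Hpd. apply ball_R.
  rewrite <- RInt_minusR by (apply jcont_ex_RInt; exact HF).
  eapply Rle_lt_trans. apply abs_RInt_le_const with (M := eps / (b - a + 1)). exact Hab.
  apply ex_RInt_minusR; apply jcont_ex_RInt; exact HF.
  intros t Ht. left. apply (Hd p Hpd t Ht).
  apply Rlt_le_trans with ((b - a + 1) * (eps / (b - a + 1))).
  apply Rmult_lt_compat_r. exact Hp. lra.
  right. field. lra.
Qed.


Notation pinf := (Rbar_locally p_infty).
Definition IG (f : R -> R) (l : R) := is_RInt_gen f (at_point 0) pinf l.

Lemma RInt_correctR (f : R -> R) a b : ex_RInt f a b -> is_RInt f a b (RInt f a b).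
Proof. intros. apply (RInt_correct (V := R_CompleteNormedModule)). assumption. Qed.
Lemma is_RInt_uniqueR (f : R -> R) a b l : is_RInt f a b l -> RInt f a b = l.
Proof. intros. apply (is_RInt_unique (V := R_CompleteNormedModule)). assumption. Qed.

Lemma ex_RInt_Ch2 (f : R -> R) a b c : a <= b <= c -> ex_RInt f a c -> ex_RInt f b c.
Proof. intros. apply (ex_RInt_Chasles_2 (V := R_CompleteNormedModule) f a); assumption. Qed.
Lemma ex_RInt_Ch1 (f : R -> R) a b c : a <= b <= c -> ex_RInt f a c -> ex_RInt f a b.
Proof. intros. apply (ex_RInt_Chasles_1 (V := R_CompleteNormedModule) f a b c); assumption. Qed.

Lemma lim_to_IG (f : R -> R) l :
  (forall b, 0 <= b -> ex_RInt f 0 b) ->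
  filterlim (fun b => RInt f 0 b) pinf (locally l) -> IG f l.
Proof.
  intros Hex Hl P HP. unfold filtermapi.
  specialize (Hl P HP). unfold filtermap in Hl. destruct Hl as [M HM].
  apply Filter_prod with (Q := fun a => a = 0) (R := fun b => Rmax M 0 < b).
  - reflexivity.
  - exists (Rmax M 0). auto.
  - intros x y -> Hy. exists (RInt f 0 y). split.
    + apply RInt_correctR. apply Hex. pose proof (Rmax_r M 0). lra.
    + apply HM. pose proof (Rmax_l M 0). lra.
Qed.

Lemma IG_to_lim (f : R -> R) l : IG f l ->
  filterlim (fun b => RInt f 0 b) pinf (locally l).
Proof.
  intros H P HP. specialize (H P HP). destruct H as [Q Rr HQ HR H].
  unfold filtermap. apply (filter_imp Rr); [|exact HR].
  intros b Hb. destruct (H 0 b HQ Hb) as [y [Hy Py]]. simpl in Hy.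
  rewrite (is_RInt_uniqueR _ _ _ _ Hy). exact Py.
Qed.

Lemma IG_ex (f : R -> R) l : IG f l -> pinf (fun b => ex_RInt f 0 b).
Proof.
  intros H. assert (HP : locally l (fun _ => True)) by (exists (mkposreal 1 Rlt_0_1); auto).
  specialize (H _ HP). destruct H as [Q Rr HQ HR H].
  apply (filter_imp Rr); [|exact HR].
  intros b Hb. destruct (H 0 b HQ Hb) as [y [Hy _]]. exists y. exact Hy.
Qed.

Lemma IG_unique (f : R -> R) l : IG f l -> RInt_gen f (at_point 0) pinf = l.
Proof. intros H. apply (is_RInt_gen_unique (V := R_CompleteNormedModule)). exact H. Qed.

Lemma IG_ext (f g : R -> R) l : (forall s, 0 < s -> f s = g s) -> IG f l -> IG g l.
Proof.
  intros Hfg H. apply (is_RInt_gen_ext f g); [| exact H].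
  apply Filter_prod with (Q := fun a => a = 0) (R := fun b => 0 < b).
  reflexivity. exists 0. auto.
  intros x y -> Hy z Hz. simpl in Hz. apply Hfg.
  rewrite Rmin_left in Hz by lra. lra.
Qed.

Lemma IG_plus (f g : R -> R) lf lg : IG f lf -> IG g lg -> IG (fun s => f s + g s) (lf + lg).
Proof. intros. apply (is_RInt_gen_plus f g); assumption. Qed.
Lemma IG_minus (f g : R -> R) lf lg : IG f lf -> IG g lg -> IG (fun s => f s - g s) (lf - lg).
Proof. intros. apply (is_RInt_gen_minus f g); assumption. Qed.
Lemma IG_scal (f : R -> R) k lf : IG f lf -> IG (fun s => k * f s) (k * lf).
Proof. intros. apply (is_RInt_gen_scal f k); assumption. Qed.

Lemma IG_norm (f g : R -> R) lf lg : (forall s, 0 <= s -> Rabs (f s) <= g s) ->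
  IG f lf -> IG g lg -> Rabs lf <= lg.
Proof.
  intros Hb Hf Hg. apply (RInt_gen_norm (V := R_CompleteNormedModule) (Fa := at_point 0) (Fb := pinf) f g lf lg); try assumption.
  - apply Filter_prod with (Q := fun a => a = 0) (R := fun b => 0 < b).
    reflexivity. exists 0. auto. intros x y -> Hy. simpl. lra.
  - apply Filter_prod with (Q := fun a => a = 0) (R := fun b => 0 < b).
    reflexivity. exists 0. auto. intros x y -> Hy z Hz. simpl in Hz. apply Hb. lra.
Qed.

Lemma IG_le (f g : R -> R) lf lg : (forall s, 0 <= s -> f s <= g s) ->
  IG f lf -> IG g lg -> lf <= lg.
Proof.
  intros Hb Hf Hg.
  assert (H := IG_norm (fun s => g s - f s) (fun s => g s - f s) (lg - lf) (lg - lf)).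
  assert (Rabs (lg - lf) <= lg - lf).
  { apply H. intros s Hs. specialize (Hb s Hs). rewrite Rabs_right; lra.
    apply IG_minus; assumption. apply IG_minus; assumption. }
  pose proof (Rle_abs (lf - lg)). rewrite Rabs_minus_sym in H1. lra.
Qed.

Lemma RInt_abs_le (f g : R -> R) a b : a <= b -> ex_RInt f a b -> ex_RInt g a b ->
  (forall x, a <= x <= b -> Rabs (f x) <= g x) -> Rabs (RInt f a b) <= RInt g a b.
Proof.
  intros Hab Hf Hg H. apply (norm_RInt_le f g a b); try assumption.
  apply RInt_correctR; assumption. apply RInt_correctR; assumption.
Qed.

Lemma RInt_Chasles_R (f : R -> R) a b c : ex_RInt f a b -> ex_RInt f b c ->
  RInt f a b + RInt f b c = RInt f a c.
Proof. intros. apply (RInt_Chasles f); assumption. Qed.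

Lemma IG_dom (f g : R -> R) lg :
  (forall b, 0 <= b -> ex_RInt f 0 b) -> (forall b, 0 <= b -> ex_RInt g 0 b) ->
  (forall s, 0 <= s -> Rabs (f s) <= g s) -> IG g lg ->
  exists l, IG f l /\ Rabs l <= lg.
Proof.
  intros Hf Hg Hb HG.
  set (Fm := filtermap (fun b => RInt f 0 b) pinf).
  assert (PF : ProperFilter Fm) by (apply filtermap_proper_filter; apply Rbar_locally_filter).
  assert (Hc : cauchy Fm).
  { intros eps. pose proof (IG_to_lim g lg HG) as Hl.
    assert (He2 : 0 < eps / 2) by (destruct eps; simpl; lra).
    apply filterlim_locally with (eps := mkposreal _ He2) in Hl. destruct Hl as [M HM].
    set (N := Rmax M 0 + 1).
    assert (HN0 : 0 <= N) by (unfold N; pose proof (Rmax_r M 0); lra).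
    assert (HNM : M < N) by (unfold N; pose proof (Rmax_l M 0); lra).
    exists (RInt f 0 N). exists N. intros b Hbn. apply ball_R.
    assert (Hb0 : 0 <= b) by lra.
    assert (exN : ex_RInt f N b) by (apply ex_RInt_Ch2 with 0; [lra| apply Hf; lra]).
    assert (exgN : ex_RInt g N b) by (apply ex_RInt_Ch2 with 0; [lra| apply Hg; lra]).
    rewrite <- (RInt_Chasles_R f 0 N b) by (try apply Hf; auto).
    assert (E : forall u v : R, u + v - u = v) by (intros; ring). rewrite E.
    eapply Rle_lt_trans. apply (RInt_abs_le f g N b); try lra; auto.
    intros x Hx. apply Hb. lra.
    pose proof (RInt_Chasles_R g 0 N b ltac:(apply Hg; auto) exgN) as Hch.
    pose proof (HM N HNM) as H1. pose proof (HM b ltac:(lra)) as H2.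
    apply ball_R in H1. apply ball_R in H2. simpl in H1, H2.
    revert H1 H2 Hch. generalize (RInt g 0 N) (RInt g N b) (RInt g 0 b). intros u v w H1 H2 Hch.
    apply Rabs_def2 in H1. apply Rabs_def2 in H2. unfold minus, plus, opp in H1, H2; simpl in H1, H2. lra. }
  set (l := lim Fm).
  assert (Hlim : filterlim (fun b => RInt f 0 b) pinf (locally l)).
  { apply filterlim_locally. intros eps. apply (complete_cauchy Fm PF Hc eps). }
  exists l. assert (HI : IG f l) by (apply lim_to_IG; assumption).
  split. exact HI. apply (IG_norm f g); assumption.
Qed.

Lemma IG_dom' (f g : R -> R) lg :
  (forall b, 0 <= b -> ex_RInt f 0 b) -> (forall b, 0 <= b -> ex_RInt g 0 b) ->
  (forall s, 0 <= s -> Rabs (f s) <= g s) -> IG g lg ->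
  IG f (RInt_gen f (at_point 0) pinf).
Proof.
  intros. destruct (IG_dom f g lg) as [l [Hl _]]; auto.
  rewrite (IG_unique f l Hl). exact Hl.
Qed.

Lemma IG_mono (f : R -> R) C :
  (forall b, 0 <= b -> ex_RInt f 0 b) -> (forall s, 0 <= s -> 0 <= f s) ->
  (forall b, 0 <= b -> RInt f 0 b <= C) -> exists l, IG f l.
Proof.
  intros Hf Hp HC.
  set (E := fun y => exists b, 0 <= b /\ y = RInt f 0 b).
  assert (HE1 : bound E) by (exists C; intros y [b [Hb ->]]; apply HC; auto).
  assert (HE2 : exists y, E y) by (exists (RInt f 0 0); exists 0; split; [lra|auto]).
  destruct (completeness E HE1 HE2) as [l [Hub Hlub]].
  exists l. apply lim_to_IG; auto.
  apply filterlim_locally. intros eps.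
  assert (Hx : exists b0, 0 <= b0 /\ l - eps < RInt f 0 b0).
  { apply NNPP. intros Hn. assert (l <= l - eps).
    { apply Hlub. intros y [b [Hb ->]]. apply Rnot_lt_le. intros Hlt. apply Hn. exists b. auto. }
    destruct eps; simpl in *; lra. }
  destruct Hx as [b0 [Hb0 Hlt]].
  exists b0. intros b Hb. apply ball_R.
  assert (Hle : RInt f 0 b <= l) by (apply Hub; exists b; split; [lra|auto]).
  assert (Hmon : RInt f 0 b0 <= RInt f 0 b).
  { rewrite <- (RInt_Chasles_R f 0 b0 b); auto.
    assert (0 <= RInt f b0 b). apply RInt_ge_0. lra. apply ex_RInt_Ch2 with 0. lra. apply Hf. lra.
    intros x Hx. apply Hp. lra. lra.
    apply ex_RInt_Ch2 with 0. lra. apply Hf. lra. }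
  rewrite Rabs_left1 by lra. lra.
Qed.


Lemma lim_minus (u v : R -> R) a b : filterlim u pinf (locally a) -> filterlim v pinf (locally b) ->
  filterlim (fun z => u z - v z) pinf (locally (a - b)).
Proof.
  intros Hu Hv. apply filterlim_locally. intros eps.
  assert (He : 0 < eps / 2) by (destruct eps; simpl; lra).
  apply filterlim_locally with (eps := mkposreal _ He) in Hu.
  apply filterlim_locally with (eps := mkposreal _ He) in Hv.
  generalize (filter_and _ _ Hu Hv). apply filter_imp. intros z [H1 H2].
  change (Rabs (u z - a) < eps / 2) in H1. change (Rabs (v z - b) < eps / 2) in H2. apply ball_R. simpl in *.
  apply Rabs_def2 in H1; apply Rabs_def2 in H2. apply Rabs_def1; lra.
Qed.

Lemma lim_plus (u v : R -> R) a b : filterlim u pinf (locally a) -> filterlim v pinf (locally b) ->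
  filterlim (fun z => u z + v z) pinf (locally (a + b)).
Proof.
  intros Hu Hv. apply filterlim_locally. intros eps.
  assert (He : 0 < eps / 2) by (destruct eps; simpl; lra).
  apply filterlim_locally with (eps := mkposreal _ He) in Hu.
  apply filterlim_locally with (eps := mkposreal _ He) in Hv.
  generalize (filter_and _ _ Hu Hv). apply filter_imp. intros z [H1 H2].
  change (Rabs (u z - a) < eps / 2) in H1. change (Rabs (v z - b) < eps / 2) in H2. apply ball_R. simpl in *.
  apply Rabs_def2 in H1; apply Rabs_def2 in H2. apply Rabs_def1; lra.
Qed.

Lemma lim_scal (u : R -> R) a k : filterlim u pinf (locally a) ->
  filterlim (fun z => k * u z) pinf (locally (k * a)).
Proof.
  intros Hu. apply filterlim_locally. intros eps.
  assert (He : 0 < eps / (Rabs k + 1)) by (apply Rdiv_lt_0_compat; [apply cond_pos| pose proof (Rabs_pos k); lra]).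
  apply filterlim_locally with (eps := mkposreal _ He) in Hu.
  generalize Hu. apply filter_imp. intros z H1.
  change (Rabs (u z - a) < eps / (Rabs k + 1)) in H1. apply ball_R. simpl in *.
  replace (k * u z - k * a) with (k * (u z - a)) by ring. rewrite Rabs_mult.
  apply Rle_lt_trans with (Rabs k * (eps / (Rabs k + 1))).
  apply Rmult_le_compat_l. apply Rabs_pos. lra.
  apply Rlt_le_trans with ((Rabs k + 1) * (eps / (Rabs k + 1))).
  apply Rmult_lt_compat_r. exact He. lra. right. field. pose proof (Rabs_pos k). lra.
Qed.

Lemma lim_const (c : R) : filterlim (fun _ : R => c) pinf (locally c).
Proof. apply filterlim_const. Qed.

Lemma lim_le (u v : R -> R) a b : filterlim u pinf (locally a) -> filterlim v pinf (locally b) ->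
  pinf (fun z => u z <= v z) -> a <= b.
Proof.
  intros Hu Hv H.
  assert (PF : ProperFilter' pinf) by (apply Proper_StrongProper; apply Rbar_locally_filter).
  exact (filterlim_le (F := pinf) u v a b H Hu Hv).
Qed.

Lemma lim_abs_le (u : R -> R) a K : filterlim u pinf (locally a) ->
  pinf (fun z => Rabs (u z) <= K) -> Rabs a <= K.
Proof.
  intros Hu H. apply Rabs_le. split.
  - apply (lim_le (fun _ => -K) u). apply lim_const. exact Hu.
    generalize H; apply filter_imp. intros z Hz. destruct (Rabs_le_between (u z) K) as [H1 _]. specialize (H1 Hz). lra.
  - apply (lim_le u (fun _ => K)). exact Hu. apply lim_const.
    generalize H; apply filter_imp. intros z Hz. destruct (Rabs_le_between (u z) K) as [H1 _]. specialize (H1 Hz). lra.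
Qed.

Lemma pinf_ge (M : R) : pinf (fun z => M <= z).
Proof. exists M. intros; lra. Qed.

Lemma IG_partial_le (g : R -> R) lg Z : IG g lg -> 0 <= Z ->
  (forall b, 0 <= b -> ex_RInt g 0 b) -> (forall s, 0 <= s -> 0 <= g s) -> RInt g 0 Z <= lg.
Proof.
  intros HG HZ Hex Hp.
  apply (lim_le (fun _ => RInt g 0 Z) (fun b => RInt g 0 b)). apply lim_const. apply IG_to_lim; auto.
  generalize (pinf_ge Z). apply filter_imp. intros b Hb.
  rewrite <- (RInt_Chasles_R g 0 Z b); auto.
  assert (0 <= RInt g Z b). apply RInt_ge_0. lra. apply ex_RInt_Ch2 with 0. lra. apply Hex; lra.
  intros x Hx; apply Hp; lra. lra. apply ex_RInt_Ch2 with 0. lra. apply Hex; lra.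
Qed.


Lemma pair_cont_snd (x y : R) : continuous (fun v : R => (x, v)) y.
Proof.
  apply (continuous_comp_2 (fun _ : R => x) (fun v : R => v) pair).
  apply continuous_const. apply continuous_id.
  intros Q [e' He']. exists e'. intros z Hz. apply He'. exact Hz.
Qed.
Lemma pair_cont_fst (x y : R) : continuous (fun u : R => (u, y)) x.
Proof.
  apply (continuous_comp_2 (fun u : R => u) (fun _ : R => y) pair).
  apply continuous_id. apply continuous_const.
  intros Q [e' He']. exists e'. intros z Hz. apply He'. exact Hz.
Qed.

Lemma c2d_snd (f : R -> R -> R) x y : continuity_2d_pt f x y -> continuous (fun v => f x v) y.
Proof.
  intros H. apply continuity_2d_pt_filterlim in H.
  apply (continuous_comp (fun v => (x, v)) (fun z : R * R => f (fst z) (snd z))).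
  apply pair_cont_snd. exact H.
Qed.
Lemma c2d_fst (f : R -> R -> R) x y : continuity_2d_pt f x y -> continuous (fun u => f u y) x.
Proof.
  intros H. apply continuity_2d_pt_filterlim in H.
  apply (continuous_comp (fun u => (u, y)) (fun z : R * R => f (fst z) (snd z))).
  apply pair_cont_fst. exact H.
Qed.

Lemma ex_derive_cont_pt (f : R -> R) x : ex_derive f x -> continuity_pt f x.
Proof. intros H. apply continuity_pt_filterlim. apply (ex_derive_continuous (K := R_AbsRing) (V := R_NormedModule) f). exact H. Qed.

Lemma locally_open (a b x : R) : a < x < b -> locally x (fun z => a < z < b).
Proof.
  intros H. assert (He : 0 < Rmin (x - a) (b - x)) by (apply Rmin_pos; lra).
  exists (mkposreal _ He). intros y Hy. change (Rabs (y - x) < Rmin (x - a) (b - x)) in Hy.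
  apply Rabs_def2 in Hy. pose proof (Rmin_l (x - a) (b - x)). pose proof (Rmin_r (x - a) (b - x)). lra.
Qed.

Lemma deriv_IG (h hd : R -> R -> R) (g : R -> R) lg t0 r :
  0 < r ->
  (forall s tau, t0 - r < tau < t0 + r -> is_derive (fun z => h s z) tau (hd s tau)) ->
  (forall s tau, 0 <= s -> t0 - r < tau < t0 + r -> continuity_2d_pt (fun u v => hd v u) tau s) ->
  (forall tau, t0 - r < tau < t0 + r -> forall b, 0 <= b -> ex_RInt (fun s => h s tau) 0 b) ->
  (forall s tau, 0 <= s -> t0 - r < tau < t0 + r -> Rabs (h s tau) <= g s /\ Rabs (hd s tau) <= g s) ->
  (forall b, 0 <= b -> ex_RInt g 0 b) -> IG g lg ->
  is_derive (fun tau => RInt_gen (fun s => h s tau) (at_point 0) pinf) t0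
            (RInt_gen (fun s => hd s t0) (at_point 0) pinf).
Proof.
  intros Hr Hder Hcont Hexh Hbd Hexg HG.
  set (J := fun tau => t0 - r < tau < t0 + r).
  assert (Ht0 : J t0) by (unfold J; lra).
  assert (Hg0 : forall s, 0 <= s -> 0 <= g s).
  { intros s Hs. destruct (Hbd s t0 Hs Ht0) as [H1 _]. pose proof (Rabs_pos (h s t0)). lra. }
  assert (Hexhd : forall tau, J tau -> forall b, 0 <= b -> ex_RInt (fun s => hd s tau) 0 b).
  { intros tau Ht b Hb. apply ex_RInt_contR. intros z Hz.
    rewrite Rmin_left in Hz by lra. rewrite Rmax_right in Hz by lra.
    apply (c2d_snd (fun u v => hd v u)). apply Hcont. lra. exact Ht. }
  set (H := fun tau => RInt_gen (fun s => h s tau) (at_point 0) pinf).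
  set (D := fun tau => RInt_gen (fun s => hd s tau) (at_point 0) pinf).
  assert (HH : forall tau, J tau -> IG (fun s => h s tau) (H tau)).
  { intros tau Ht. apply (IG_dom' _ g lg); auto. intros s Hs. apply (Hbd s tau Hs Ht). }
  assert (HD : forall tau, J tau -> IG (fun s => hd s tau) (D tau)).
  { intros tau Ht. apply (IG_dom' _ g lg); auto. intros s Hs. apply (Hbd s tau Hs Ht). }
  set (HY := fun Y tau => RInt (fun s => h s tau) 0 Y).
  set (DY := fun Y tau => RInt (fun s => hd s tau) 0 Y).
  assert (HderY : forall Y tau, 0 <= Y -> J tau -> is_derive (HY Y) tau (DY Y tau)).
  { intros Y tau HY0 Ht. unfold HY, DY.
    assert (E : RInt (fun s => hd s tau) 0 Y = RInt (fun s => Derive (fun u => h s u) tau) 0 Y).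
    { apply RInt_ext. intros x _. symmetry. apply is_derive_unique. apply Hder. exact Ht. }
    rewrite E.
    apply (is_derive_RInt_param (fun z s => h s z) 0 Y tau).
    - generalize (locally_open _ _ _ Ht). apply filter_imp. intros z Hz t _. exists (hd t z). apply Hder. exact Hz.
    - intros t Htt. rewrite Rmin_left in Htt by lra. rewrite Rmax_right in Htt by lra.
      apply continuity_2d_pt_ext_loc with (fun u v => hd v u).
      + destruct (locally_open _ _ _ Ht) as [e He]. exists e. intros u v Hu _.
        symmetry. apply is_derive_unique. apply Hder. apply He. exact Hu.
      + apply Hcont. lra. exact Ht.
    - generalize (locally_open _ _ _ Ht). apply filter_imp. intros z Hz. apply Hexh. exact Hz. exact HY0. }
  set (T := fun Y => lg - RInt g 0 Y).
  assert (HT : filterlim T pinf (locally 0)).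
  { assert (HT' : filterlim T pinf (locally (lg - lg))).
    { unfold T. apply lim_minus. apply lim_const. apply IG_to_lim. exact HG. }
    replace (lg - lg) with 0 in HT' by ring. exact HT'. }
  assert (Hgtail : forall Y Z, 0 <= Y <= Z -> RInt g Y Z <= T Y).
  { intros Y Z HYZ. unfold T. pose proof (IG_partial_le g lg Z HG ltac:(lra) Hexg Hg0).
    rewrite <- (RInt_Chasles_R g 0 Y Z) in H0. lra. apply Hexg; lra. apply ex_RInt_Ch2 with 0. lra. apply Hexg; lra. }
  assert (Hdiff : forall Y Z tau, 0 <= Y <= Z -> J tau -> Rabs (DY Z tau - DY Y tau) <= T Y).
  { intros Y Z tau HYZ Ht. unfold DY.
    rewrite <- (RInt_Chasles_R (fun s => hd s tau) 0 Y Z).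
    assert (E : forall u v : R, u + v - u = v) by (intros; ring). rewrite E.
    eapply Rle_trans. apply (RInt_abs_le _ g). lra. apply ex_RInt_Ch2 with 0. lra. apply Hexhd; auto; lra.
    apply ex_RInt_Ch2 with 0. lra. apply Hexg; lra.
    intros x Hx. apply (Hbd x tau). lra. exact Ht. apply Hgtail. exact HYZ.
    apply Hexhd; auto; lra. apply ex_RInt_Ch2 with 0. lra. apply Hexhd; auto; lra. }
  assert (Hkey : forall Y tau, 0 <= Y -> J tau ->
     Rabs ((H tau - H t0) - (HY Y tau - HY Y t0)) <= Rabs (tau - t0) * T Y).
  { intros Y tau HY0 Ht.
    assert (Hlim : filterlim (fun Z => (HY Z tau - HY Y tau) - (HY Z t0 - HY Y t0)) pinf
                     (locally ((H tau - HY Y tau) - (H t0 - HY Y t0)))).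
    { apply lim_minus; apply lim_minus; try apply lim_const; apply IG_to_lim; apply HH; auto. }
    replace ((H tau - H t0) - (HY Y tau - HY Y t0)) with ((H tau - HY Y tau) - (H t0 - HY Y t0)) by ring.
    apply (lim_abs_le _ _ _ Hlim). generalize (pinf_ge Y). apply filter_imp. intros Z HZ.
    set (phi := fun sg => HY Z sg - HY Y sg).
    assert (Hphi : forall sg, J sg -> is_derive phi sg (DY Z sg - DY Y sg)).
    { intros sg Hs. apply (is_derive_minus (HY Z) (HY Y)); apply HderY; auto; lra. }
    destruct (MVT_gen phi t0 tau (fun sg => DY Z sg - DY Y sg)) as [c [Hc Hmvt]].
    - intros x Hx. apply Hphi. unfold J in *.
      destruct (Rle_dec t0 tau). rewrite Rmin_left, Rmax_right in Hx by lra. lra.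
      rewrite Rmin_right, Rmax_left in Hx by lra. lra.
    - intros x Hx. apply ex_derive_cont_pt. eexists. apply Hphi. unfold J in *.
      destruct (Rle_dec t0 tau). rewrite Rmin_left, Rmax_right in Hx by lra. lra.
      rewrite Rmin_right, Rmax_left in Hx by lra. lra.
    - unfold phi in Hmvt. rewrite Hmvt. rewrite Rabs_mult. rewrite Rmult_comm.
      apply Rmult_le_compat_l. apply Rabs_pos. apply Hdiff. lra. unfold J in *.
      destruct (Rle_dec t0 tau). rewrite Rmin_left, Rmax_right in Hc by lra. lra.
      rewrite Rmin_right, Rmax_left in Hc by lra. lra. }
  assert (HDY : forall Y, 0 <= Y -> Rabs (D t0 - DY Y t0) <= T Y).
  { intros Y HY0.
    assert (Hlim : filterlim (fun Z => DY Z t0 - DY Y t0) pinf (locally (D t0 - DY Y t0))).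
    { apply lim_minus. apply IG_to_lim; apply HD; auto. apply lim_const. }
    apply (lim_abs_le _ _ _ Hlim). generalize (pinf_ge Y). apply filter_imp. intros Z HZ.
    apply Hdiff. lra. exact Ht0. }
  apply is_derive_Reals. intros eps Heps.
  assert (He3 : 0 < eps / 3) by lra.
  apply filterlim_locally with (eps := mkposreal _ He3) in HT. destruct HT as [M HM].
  set (Y := Rmax M 0 + 1).
  assert (HY0 : 0 <= Y) by (unfold Y; pose proof (Rmax_r M 0); lra).
  assert (HTY : Rabs (T Y) < eps / 3).
  { specialize (HM Y ltac:(unfold Y; pose proof (Rmax_l M 0); lra)). change (Rabs (T Y - 0) < eps / 3) in HM.
    rewrite Rminus_0_r in HM. exact HM. }
  pose proof (HderY Y t0 HY0 Ht0) as Hd. apply is_derive_Reals in Hd.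
  destruct (Hd (eps / 3) He3) as [d1 Hd1].
  assert (Hd2 : 0 < Rmin d1 r) by (apply Rmin_pos; [apply cond_pos | lra]).
  exists (mkposreal _ Hd2). intros k Hk0 Hk. simpl in Hk.
  pose proof (Rmin_l d1 r). pose proof (Rmin_r d1 r).
  assert (HJ : J (t0 + k)) by (unfold J; apply Rabs_def2 in Hk; lra).
  specialize (Hd1 k Hk0 ltac:(lra)).
  specialize (Hkey Y (t0 + k) HY0 HJ). specialize (HDY Y HY0).
  replace (t0 + k - t0) with k in Hkey by ring.
  assert (Hk' : 0 < Rabs k) by (apply Rabs_pos_lt; exact Hk0).
  assert (Hq : Rabs (((H (t0 + k) - H t0) - (HY Y (t0 + k) - HY Y t0)) / k) <= T Y).
  { unfold Rdiv. rewrite Rabs_mult, Rabs_inv.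
    apply Rmult_le_reg_r with (Rabs k). exact Hk'. rewrite Rmult_assoc, Rinv_l by lra. lra. }
  change (Rabs ((H (t0 + k) - H t0) / k - D t0) < eps).
  revert Hq Hd1 HDY HTY. generalize (H (t0 + k)) (H t0) (HY Y (t0 + k)) (HY Y t0) (DY Y t0) (D t0) (T Y).
  intros a b c d e f tY Hq Hd1 HDY HTY.
  replace ((a - b) / k - f) with (((a - b) - (c - d)) / k + ((c - d) / k - e) - (f - e)) by (field; lra).
  eapply Rle_lt_trans. apply Rabs_triang. rewrite Rabs_Ropp.
  eapply Rle_lt_trans. apply Rplus_le_compat_r. apply Rabs_triang.
  apply Rabs_def2 in HTY. lra.
Qed.


Definition c2 (k : R -> R -> R) := forall x y, continuity_2d_pt k x y.

Lemma c2_jcont (k : R -> R -> R) : c2 k -> jcont (P := R_UniformSpace) k.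
Proof. intros H x y. apply continuity_2d_pt_filterlim. apply H. Qed.

Lemma c2_swap (k : R -> R -> R) : c2 k -> c2 (fun u v => k v u).
Proof.
  intros H x y eps. destruct (H y x eps) as [d Hd]. exists d. intros u v Hu Hv. apply Hd; assumption.
Qed.

Lemma RInt_point_R (f : R -> R) a : RInt f a a = 0.
Proof. apply (RInt_point (V := R_CompleteNormedModule)). Qed.

Lemma RInt_swap_R (f : R -> R) a b : ex_RInt f a b -> RInt f b a = - RInt f a b.
Proof. intros H. symmetry. apply (opp_RInt_swap (V := R_CompleteNormedModule)). exact H. Qed.

Lemma c2_ex_RInt_snd (k : R -> R -> R) x a b : c2 k -> ex_RInt (fun y => k x y) a b.
Proof. intros H. apply ex_RInt_contR. intros z _. apply c2d_snd. apply H. Qed.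
Lemma c2_ex_RInt_fst (k : R -> R -> R) y a b : c2 k -> ex_RInt (fun x => k x y) a b.
Proof. intros H. apply ex_RInt_contR. intros z _. apply c2d_fst. apply H. Qed.

Lemma c2_param_cont (k : R -> R -> R) a b x0 : c2 k ->
  continuous (fun x => RInt (fun y => k x y) a b) x0.
Proof.
  intros H. destruct (Rle_dec a b) as [Hab|Hab].
  - apply (param_cont (P := R_UniformSpace) (fun y x => k x y) a b x0 Hab). apply c2_jcont. apply c2_swap. exact H.
  - apply (continuous_ext (fun x => - RInt (fun y => k x y) b a)).
    intros x. rewrite (RInt_swap_R _ b a). reflexivity. apply c2_ex_RInt_snd. exact H.
    apply (continuous_opp (fun x => RInt (fun y => k x y) b a)).
    apply (param_cont (P := R_UniformSpace) (fun y x => k x y) b a x0). lra. apply c2_jcont. apply c2_swap. exact H.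
Qed.

Lemma FF (k : R -> R -> R) a b Y : c2 k ->
  RInt (fun x => RInt (fun s => k x s) 0 Y) a b = RInt (fun s => RInt (fun x => k x s) a b) 0 Y.
Proof.
  intros Hk.
  set (P1 := fun Y => RInt (fun x => RInt (fun s => k x s) 0 Y) a b).
  set (P2 := fun Y => RInt (fun s => RInt (fun x => k x s) a b) 0 Y).
  assert (Hc2 : forall s, continuous (fun s => RInt (fun x => k x s) a b) s).
  { intros s. apply (c2_param_cont (fun s x => k x s)). apply c2_swap. exact Hk. }
  assert (Hd2 : forall y, is_derive P2 y (RInt (fun x => k x y) a b)).
  { intros y. apply (is_derive_RInt (V := R_NormedModule) (fun s => RInt (fun x => k x s) a b) P2 0 y).
    - exists (mkposreal 1 Rlt_0_1). intros z _. apply RInt_correctR. apply ex_RInt_contR. intros; apply Hc2.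
    - apply Hc2. }
  assert (HDer : forall x u, Derive (fun z => RInt (fun s => k x s) 0 z) u = k x u).
  { intros x u. apply Derive_RInt.
    exists (mkposreal 1 Rlt_0_1). intros z _. apply c2_ex_RInt_snd. exact Hk.
    apply c2d_snd. apply Hk. }
  assert (Hd1 : forall y, is_derive P1 y (RInt (fun x => k x y) a b)).
  { intros y. unfold P1.
    assert (E : RInt (fun x => k x y) a b = RInt (fun x => Derive (fun u => RInt (fun s => k x s) 0 u) y) a b).
    { apply RInt_ext. intros x _. rewrite HDer. reflexivity. }
    rewrite E.
    apply (is_derive_RInt_param (fun z x => RInt (fun s => k x s) 0 z) a b y).
    - exists (mkposreal 1 Rlt_0_1). intros z _ t _. eexists.
      apply (is_derive_RInt (V := R_NormedModule) (fun s => k t s) _ 0 z).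
      exists (mkposreal 1 Rlt_0_1). intros w _. apply RInt_correctR. apply c2_ex_RInt_snd. exact Hk.
      apply c2d_snd. apply Hk.
    - intros t _. apply continuity_2d_pt_ext with (fun u v => k v u).
      intros u v. rewrite HDer. reflexivity. apply c2_swap. exact Hk.
    - exists (mkposreal 1 Rlt_0_1). intros z _. apply ex_RInt_contR. intros w _.
      apply c2_param_cont. exact Hk. }
  assert (Hc : forall y, is_derive (fun z => P1 z - P2 z) y 0).
  { intros y. replace 0 with (RInt (fun x => k x y) a b - RInt (fun x => k x y) a b) by ring.
    apply (is_derive_minus P1 P2); auto. }
  destruct (MVT_gen (fun z => P1 z - P2 z) 0 Y (fun _ => 0)) as [c [_ Hm]].
  - intros; apply Hc.
  - intros x _. apply ex_derive_cont_pt. eexists. apply Hc.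
  - assert (P1 0 = 0).
    { unfold P1. rewrite (RInt_ext _ (fun _ => 0)). 
      rewrite (RInt_const (V := R_CompleteNormedModule)). simpl. unfold scal; simpl. unfold mult; simpl. ring.
      intros; apply RInt_point_R. }
    assert (P2 0 = 0) by (unfold P2; apply RInt_point_R).
    change (P1 Y = P2 Y). lra.
Qed.

Lemma IG_tail (f g : R -> R) lf lg Y : 0 <= Y ->
  (forall b, 0 <= b -> ex_RInt f 0 b) -> (forall b, 0 <= b -> ex_RInt g 0 b) ->
  (forall s, 0 <= s -> Rabs (f s) <= g s) -> IG f lf -> IG g lg ->
  Rabs (lf - RInt f 0 Y) <= lg - RInt g 0 Y.
Proof.
  intros HY Hf Hg Hb HF HG.
  assert (Hg0 : forall s, 0 <= s -> 0 <= g s) by (intros s Hs; pose proof (Hb s Hs); pose proof (Rabs_pos (f s)); lra).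
  assert (Hlim : filterlim (fun Z => RInt f 0 Z - RInt f 0 Y) pinf (locally (lf - RInt f 0 Y))).
  { apply lim_minus. apply IG_to_lim; auto. apply lim_const. }
  apply (lim_abs_le _ _ _ Hlim). generalize (pinf_ge Y). apply filter_imp. intros Z HZ.
  rewrite <- (RInt_Chasles_R f 0 Y Z); auto. 2: apply ex_RInt_Ch2 with 0; [lra| apply Hf; lra].
  assert (E : forall u v : R, u + v - u = v) by (intros; ring). rewrite E.
  eapply Rle_trans. apply (RInt_abs_le _ g). lra. apply ex_RInt_Ch2 with 0. lra. apply Hf; lra.
  apply ex_RInt_Ch2 with 0. lra. apply Hg; lra.
  intros x Hx. apply Hb. lra.
  pose proof (IG_partial_le g lg Z HG ltac:(lra) Hg Hg0).
  rewrite <- (RInt_Chasles_R g 0 Y Z) in H; auto. lra. apply ex_RInt_Ch2 with 0. lra. apply Hg; lra.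
Qed.

Lemma IG_tail0 (g : R -> R) lg : IG g lg -> filterlim (fun Y => lg - RInt g 0 Y) pinf (locally 0).
Proof.
  intros HG. assert (HT' : filterlim (fun Y => lg - RInt g 0 Y) pinf (locally (lg - lg))).
  { apply lim_minus. apply lim_const. apply IG_to_lim. exact HG. }
  replace (lg - lg) with 0 in HT' by ring. exact HT'.
Qed.

Lemma GF (k : R -> R -> R) (g : R -> R) lg a b :
  a <= b -> c2 k -> (forall b', 0 <= b' -> ex_RInt g 0 b') -> IG g lg ->
  (forall x s, 0 <= s -> Rabs (k x s) <= g s) ->
  ex_RInt (fun x => RInt_gen (fun s => k x s) (at_point 0) pinf) a b /\
  IG (fun s => RInt (fun x => k x s) a b) (RInt (fun x => RInt_gen (fun s => k x s) (at_point 0) pinf) a b).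
Proof.
  intros Hab Hk Hg HG Hb.
  set (Kx := fun x => RInt_gen (fun s => k x s) (at_point 0) pinf).
  assert (HK : forall x, IG (fun s => k x s) (Kx x)).
  { intros x. apply (IG_dom' _ g lg); auto. intros; apply c2_ex_RInt_snd; auto. }
  set (T := fun Y => lg - RInt g 0 Y).
  assert (HT : filterlim T pinf (locally 0)) by (apply IG_tail0; auto).
  assert (Htail : forall x Y, 0 <= Y -> Rabs (Kx x - RInt (fun s => k x s) 0 Y) <= T Y).
  { intros x Y HY. apply (IG_tail (fun s => k x s) g); auto. intros; apply c2_ex_RInt_snd; auto. }
  assert (HKc : forall x0, continuous Kx x0).
  { intros x0. apply filterlim_locally. intros eps.
    assert (He3 : 0 < eps / 3) by (destruct eps; simpl; lra).
    apply filterlim_locally with (eps := mkposreal _ He3) in HT. destruct HT as [M HM].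
    set (Y := Rmax M 0 + 1).
    assert (HY0 : 0 <= Y) by (unfold Y; pose proof (Rmax_r M 0); lra).
    assert (HTY : Rabs (T Y - 0) < eps / 3) by (apply HM; unfold Y; pose proof (Rmax_l M 0); lra).
    rewrite Rminus_0_r in HTY.
    pose proof (c2_param_cont k 0 Y x0 Hk) as Hc. apply filterlim_locally with (eps := mkposreal _ He3) in Hc.
    generalize Hc. apply filter_imp. intros x Hx. change (Rabs (RInt (fun y => k x y) 0 Y - RInt (fun y => k x0 y) 0 Y) < eps / 3) in Hx.
    apply ball_R. pose proof (Htail x Y HY0). pose proof (Htail x0 Y HY0).
    revert Hx H H0 HTY. generalize (Kx x) (Kx x0) (RInt (fun y => k x y) 0 Y) (RInt (fun y => k x0 y) 0 Y) (T Y).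
    intros p q u v w H1 H2 H3 H4. apply Rabs_def2 in H1. apply Rabs_def2 in H4.
    apply Rabs_le_between' in H2. apply Rabs_le_between' in H3. apply Rabs_def1; simpl in *; lra. }
  assert (HexK : ex_RInt Kx a b) by (apply ex_RInt_contR; intros; apply HKc).
  split. exact HexK.
  apply lim_to_IG.
  - intros b' _. apply ex_RInt_contR. intros z _. apply (c2_param_cont (fun s x => k x s)). apply c2_swap. exact Hk.
  - apply filterlim_locally. intros eps.
    assert (He : 0 < eps / (b - a + 1)) by (apply Rdiv_lt_0_compat; [apply cond_pos|lra]).
    apply filterlim_locally with (eps := mkposreal _ He) in HT. destruct HT as [M HM].
    exists (Rmax M 0). intros Y HY. apply ball_R.
    assert (HY0 : 0 <= Y) by (pose proof (Rmax_r M 0); lra).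
    assert (HTY : Rabs (T Y - 0) < eps / (b - a + 1)) by (apply HM; pose proof (Rmax_l M 0); lra).
    rewrite Rminus_0_r in HTY.
    rewrite <- FF by exact Hk.
    rewrite <- RInt_minusR. 2: apply ex_RInt_contR; intros; apply c2_param_cont; exact Hk. 2: exact HexK.
    eapply Rle_lt_trans. apply abs_RInt_le_const with (M := T Y). exact Hab.
    apply ex_RInt_minusR. apply ex_RInt_contR; intros; apply c2_param_cont; exact Hk. exact HexK.
    intros t _. rewrite Rabs_minus_sym. apply Htail. exact HY0.
    apply Rabs_def2 in HTY.
    apply Rle_lt_trans with ((b - a) * (eps / (b - a + 1))).
    apply Rmult_le_compat_l; lra.
    apply Rlt_le_trans with ((b - a + 1) * (eps / (b - a + 1))).
    apply Rmult_lt_compat_r; lra. right. field. lra.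
Qed.


Section K.
Variables (kappa : R -> R) (delta : R).
Hypothesis HK : kernel_hyp kappa delta.

Lemma k_der s : 0 <= s -> ex_derive kappa s.
Proof. destruct HK as [H _]. apply H. Qed.
Lemma k_dcont s : 0 <= s -> continuous (Derive kappa) s.
Proof. destruct HK as [_ [H _]]. apply H. Qed.
Lemma k_pos s : 0 <= s -> 0 < kappa s.
Proof. destruct HK as [_ [_ [_ [H _]]]]. apply H. Qed.
Lemma k_dneg s : 0 <= s -> Derive kappa s <= 0.
Proof. destruct HK as [_ [_ [_ [_ [H _]]]]]. apply H. Qed.
Lemma k_delta : 0 < delta.
Proof. destruct HK as [_ [_ [_ [_ [_ [H _]]]]]]. apply H. Qed.
Lemma k_dle s : 0 <= s -> Derive kappa s <= - delta * kappa s.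
Proof. destruct HK as [_ [_ [_ [_ [_ [_ H]]]]]]. apply H. Qed.
Lemma k_cont s : 0 <= s -> continuous kappa s.
Proof. intros Hs. apply (ex_derive_continuous (K := R_AbsRing) (V := R_NormedModule)). apply k_der. exact Hs. Qed.

Lemma cont_poly1 s : continuous (fun s : R => 1 + s) s.
Proof. apply (continuous_plus (fun _ : R => 1) (fun s : R => s)). apply continuous_const. apply continuous_id. Qed.

Lemma cont_mulR (f g : R -> R) x : continuous f x -> continuous g x -> continuous (fun y => f y * g y) x.
Proof. intros. apply (continuous_mult f g); assumption. Qed.
Lemma cont_plusR (f g : R -> R) x : continuous f x -> continuous g x -> continuous (fun y => f y + g y) x.
Proof. intros. apply (continuous_plus f g); assumption. Qed.
Lemma cont_minusR (f g : R -> R) x : continuous f x -> continuous g x -> continuous (fun y => f y - g y) x.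
Proof. intros. apply (continuous_minus f g); assumption. Qed.
Lemma cont_constR (c x : R) : continuous (fun _ : R => c) x.
Proof. apply continuous_const. Qed.
Lemma cont_idR (x : R) : continuous (fun y : R => y) x.
Proof. apply continuous_id. Qed.

Lemma cont_exd (f : R -> R) x : ex_derive f x -> continuous f x.
Proof. intros. apply (ex_derive_continuous (K := R_AbsRing) (V := R_NormedModule)). assumption. Qed.

Definition g0' := RInt_gen kappa (at_point 0) pinf.
Lemma IG_k : IG kappa g0'.
Proof. destruct HK as [_ [_ [H _]]]. exact (@RInt_gen_correct R_CompleteNormedModule _ _ (Proper_StrongProper _ (at_point_filter 0)) (Proper_StrongProper _ (Rbar_locally_filter p_infty)) kappa H). Qed.

Lemma ex_k b : 0 <= b -> ex_RInt kappa 0 b.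
Proof. intros Hb. apply ex_RInt_contR. intros z Hz. rewrite Rmin_left in Hz by lra. apply k_cont. lra. Qed.

Lemma g0_pos : 0 < g0'.
Proof.
  assert (H1 : 0 < RInt kappa 0 1).
  { apply RInt_gt_0. lra. intros x Hx. apply k_pos. lra. intros x Hx. apply k_cont. lra. }
  assert (RInt kappa 0 1 <= g0').
  { apply (IG_partial_le kappa g0' 1 IG_k). lra. apply ex_k. intros s Hs. left. apply k_pos. exact Hs. }
  lra.
Qed.

Lemma k_ibp (n : nat) b : 0 <= b ->
  RInt (fun s => Derive kappa s * (1 + s) ^ (S n) + INR (S n) * (kappa s * (1 + s) ^ n)) 0 b
  = kappa b * (1 + b) ^ (S n) - kappa 0.
Proof.
  intros Hb.
  assert (H1 : forall x, Rmin 0 b <= x <= Rmax 0 b -> is_derive (fun s => kappa s * (1 + s) ^ (S n)) x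
     (Derive kappa x * (1 + x) ^ (S n) + INR (S n) * (kappa x * (1 + x) ^ n))).
  { intros x Hx. rewrite Rmin_left, Rmax_right in Hx by lra.
    assert (Hd : is_derive (fun s => (1 + s) ^ S n) x (INR (S n) * (1 + x) ^ n)).
    { apply is_derive_Reals. replace (INR (S n) * (1 + x) ^ n) with (INR (S n) * (1 + x) ^ pred (S n) * 1) by (simpl; ring).
      apply (derivable_pt_lim_comp (fun s => 1 + s) (fun u => u ^ S n)).
      apply is_derive_Reals. auto_derive. auto. ring. apply derivable_pt_lim_pow. }
    assert (Hk : is_derive kappa x (Derive kappa x)) by (apply Derive_correct; apply k_der; lra).
    generalize (is_derive_mult kappa (fun s => (1 + s) ^ S n) x _ _ Hk Hd (fun a b => Rmult_comm a b)). intros Hm.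
    eapply is_derive_ext; [| eapply filterdiff_ext_lin; [apply Hm|]]. intros t. reflexivity.
    intros y. simpl. unfold scal, plus, mult; simpl. unfold mult; simpl. ring. }
  assert (H2 : forall x, Rmin 0 b <= x <= Rmax 0 b -> continuous
     (fun x => Derive kappa x * (1 + x) ^ (S n) + INR (S n) * (kappa x * (1 + x) ^ n)) x).
  { intros x Hx. rewrite Rmin_left, Rmax_right in Hx by lra.
    apply cont_plusR. apply cont_mulR. apply k_dcont. lra.
    apply cont_exd. auto_derive. auto.
    apply cont_mulR. apply cont_constR. apply cont_mulR. apply k_cont. lra.
    apply cont_exd. auto_derive. auto. }
  pose proof (is_RInt_derive (V := R_CompleteNormedModule) _ _ 0 b H1 H2) as H.
  rewrite (is_RInt_uniqueR _ _ _ _ H). unfold minus, plus, opp; simpl. rewrite Rplus_0_r, pow1. ring.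
Qed.

Definition kp (n : nat) (s : R) := kappa s * (1 + s) ^ n.
Definition wk (n : nat) (s : R) := - Derive kappa s * (1 + s) ^ n.

Lemma cont_pow1 n x : continuous (fun s : R => (1 + s) ^ n) x.
Proof. apply cont_exd. auto_derive. auto. Qed.

Lemma ex_kp n b : 0 <= b -> ex_RInt (kp n) 0 b.
Proof. intros Hb. apply ex_RInt_contR. intros z Hz. rewrite Rmin_left in Hz by lra.
  apply cont_mulR. apply k_cont; lra. apply cont_pow1. Qed.
Lemma ex_wk n b : 0 <= b -> ex_RInt (wk n) 0 b.
Proof. intros Hb. apply ex_RInt_contR. intros z Hz. rewrite Rmin_left in Hz by lra.
  apply cont_mulR. apply (continuous_opp (Derive kappa)). apply k_dcont; lra. apply cont_pow1. Qed.

Lemma kp_pos n s : 0 <= s -> 0 <= kp n s.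
Proof. intros Hs. unfold kp. apply Rmult_le_pos. left; apply k_pos; auto. apply pow_le. lra. Qed.
Lemma wk_pos n s : 0 <= s -> 0 <= wk n s.
Proof. intros Hs. unfold wk. apply Rmult_le_pos. pose proof (k_dneg s Hs). lra. apply pow_le. lra. Qed.
Lemma kp_le_wk n s : 0 <= s -> kp n s <= / delta * wk n s.
Proof.
  intros Hs. unfold kp, wk. pose proof k_delta. pose proof (k_dle s Hs).
  assert (kappa s <= / delta * - Derive kappa s).
  { apply Rmult_le_reg_l with delta. lra. rewrite <- Rmult_assoc, Rinv_r by lra. lra. }
  rewrite <- Rmult_assoc. apply Rmult_le_compat_r. apply pow_le; lra. lra.
Qed.

Lemma RInt_kp_le n b : 0 <= b -> RInt (kp n) 0 b <= / delta * RInt (wk n) 0 b.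
Proof.
  intros Hb. rewrite <- RInt_scalR by (apply ex_wk; auto).
  apply RInt_le. lra. apply ex_kp; auto. apply ex_RInt_scalR. apply ex_wk; auto.
  intros x Hx. apply kp_le_wk. lra.
Qed.

Lemma RInt_wk_eq n b : 0 <= b ->
  RInt (wk (S n)) 0 b = kappa 0 - kappa b * (1 + b) ^ (S n) + INR (S n) * RInt (kp n) 0 b.
Proof.
  intros Hb. pose proof (k_ibp n b Hb) as E.
  rewrite RInt_plusR in E. rewrite RInt_scalR in E.
  assert (E2 : RInt (wk (S n)) 0 b = - RInt (fun s => Derive kappa s * (1 + s) ^ S n) 0 b).
  { unfold wk. replace (- RInt (fun s => Derive kappa s * (1 + s) ^ S n) 0 b) with
      (-1 * RInt (fun s => Derive kappa s * (1 + s) ^ S n) 0 b) by ring.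
    rewrite <- (RInt_scalR _ _ _ (-1)). apply RInt_extR. intros; ring.
    apply ex_RInt_contR. intros z Hz. rewrite Rmin_left, Rmax_right in Hz by lra.
    apply cont_mulR. apply k_dcont; lra. apply cont_pow1. }
  unfold kp. lra.
  apply ex_kp; auto.
  apply ex_RInt_contR. intros z Hz. rewrite Rmin_left, Rmax_right in Hz by lra.
  apply cont_mulR. apply k_dcont; lra. apply cont_pow1.
  apply ex_RInt_scalR. apply ex_kp; auto.
Qed.

Lemma RInt_wk_le n b : 0 <= b -> RInt (wk (S n)) 0 b <= kappa 0 + INR (S n) * RInt (kp n) 0 b.
Proof.
  intros Hb. rewrite RInt_wk_eq by auto.
  assert (0 <= kappa b * (1 + b) ^ S n) by (apply (kp_pos (S n) b Hb)). lra.
Qed.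

Definition KC1 := (kappa 0 + g0') / delta.
Definition KC2 := kappa 0 + 2 * KC1.

Lemma RInt_kp0_le b : 0 <= b -> RInt (kp 0) 0 b <= g0'.
Proof.
  intros Hb. apply (IG_partial_le (kp 0) g0' b).
  - apply (IG_ext kappa). intros; unfold kp; simpl; ring. apply IG_k.
  - lra.
  - intros; apply ex_kp; auto.
  - intros; apply kp_pos; auto.
Qed.

Lemma RInt_kp1_le b : 0 <= b -> RInt (kp 1) 0 b <= KC1.
Proof.
  intros Hb. eapply Rle_trans. apply RInt_kp_le; auto. unfold KC1. unfold Rdiv. rewrite (Rmult_comm (kappa 0 + g0')).
  apply Rmult_le_compat_l. left; apply Rinv_0_lt_compat, k_delta.
  eapply Rle_trans. apply (RInt_wk_le 0). auto. simpl. pose proof (RInt_kp0_le b Hb). lra.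
Qed.

Lemma RInt_wk2_le b : 0 <= b -> RInt (wk 2) 0 b <= KC2.
Proof.
  intros Hb. eapply Rle_trans. apply (RInt_wk_le 1). auto. unfold KC2.
  pose proof (RInt_kp1_le b Hb). simpl INR. lra.
Qed.

Lemma kp2_bound b : 0 <= b -> kappa b * (1 + b) ^ 2 <= KC2.
Proof.
  intros Hb. pose proof (RInt_wk_eq 1 b Hb). pose proof (RInt_kp1_le b Hb).
  assert (0 <= RInt (wk 2) 0 b) by (apply RInt_ge_0; [lra| apply ex_wk; auto| intros; apply wk_pos; lra]).
  unfold KC2. simpl INR in *. lra.
Qed.

Lemma IG_kp1 : exists l, IG (kp 1) l.
Proof. apply (IG_mono _ KC1). intros; apply ex_kp; auto. intros; apply kp_pos; auto. apply RInt_kp1_le. Qed.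
Lemma IG_wk2 : exists l, IG (wk 2) l.
Proof. apply (IG_mono _ KC2). intros; apply ex_wk; auto. intros; apply wk_pos; auto. apply RInt_wk2_le. Qed.
Lemma IG_kp2 : exists l, IG (kp 2) l.
Proof.
  apply (IG_mono _ (/ delta * KC2)). intros; apply ex_kp; auto. intros; apply kp_pos; auto.
  intros b Hb. eapply Rle_trans. apply RInt_kp_le; auto. apply Rmult_le_compat_l.
  left; apply Rinv_0_lt_compat, k_delta. apply RInt_wk2_le; auto.
Qed.

Lemma k_tail : filterlim (fun Y => kappa Y * (1 + Y)) pinf (locally 0).
Proof.
  apply filterlim_locally. intros eps.
  assert (HC2 : 0 <= KC2) by (pose proof (kp2_bound 0 ltac:(lra)); pose proof (k_pos 0 ltac:(lra)); simpl in *; nra).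
  exists (KC2 / eps). intros Y HY. apply ball_R.
  assert (HY0 : 0 < Y + 1).
  { assert (0 <= KC2 / eps) by (apply Rdiv_le_0_compat; [lra| apply cond_pos]). lra. }
  destruct (Rle_dec 0 Y) as [HY1|HY1].
  - pose proof (kp2_bound Y HY1). pose proof (k_pos Y HY1).
    rewrite Rminus_0_r, Rabs_right by nra.
    assert (KC2 < eps * (1 + Y)).
    { apply Rmult_lt_reg_l with (/ eps). apply Rinv_0_lt_compat, cond_pos.
      rewrite <- Rmult_assoc, Rinv_l by (apply Rgt_not_eq, cond_pos). rewrite Rmult_1_l.
      unfold Rdiv in HY. lra. }
    apply Rmult_lt_reg_r with (1 + Y). lra. simpl in H. nra.
  - exfalso. assert (0 <= KC2 / eps) by (apply Rdiv_le_0_compat; [lra| apply cond_pos]). lra.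
Qed.
End K.


Lemma jcont_plus {P : UniformSpace} (F G : R -> P -> R) : jcont F -> jcont G -> jcont (fun x p => F x p + G x p).
Proof. intros HF HG x p. apply (continuous_plus (fun z : R * P => F (fst z) (snd z)) (fun z : R * P => G (fst z) (snd z))); auto. Qed.
Lemma jcont_mult {P : UniformSpace} (F G : R -> P -> R) : jcont F -> jcont G -> jcont (fun x p => F x p * G x p).
Proof. intros HF HG x p. apply (continuous_mult (fun z : R * P => F (fst z) (snd z)) (fun z : R * P => G (fst z) (snd z))); auto. Qed.
Lemma jcont_const {P : UniformSpace} (c : R) : jcont (P := P) (fun _ _ => c).
Proof. intros x p. apply continuous_const. Qed.
Lemma jcont_abs {P : UniformSpace} (F : R -> P -> R) : jcont F -> jcont (fun x p => Rabs (F x p)).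
Proof. intros HF x p. apply (continuous_comp (fun z : R * P => F (fst z) (snd z)) Rabs). auto. apply continuous_Rabs. Qed.

Lemma c3_x_s (F : R -> R -> R -> R) t : cont3 F -> jcont (P := R_UniformSpace) (fun x s => F x s t).
Proof.
  intros H x s. apply (continuous_comp (fun z : R * R => (fst z, snd z, t)) (fun p : R * R * R => F (fst (fst p)) (snd (fst p)) (snd p))).
  - apply (continuous_comp_2 (fun z : R * R => (fst z, snd z)) (fun _ => t) pair).
    apply (continuous_comp_2 (fun z : R * R => fst z) (fun z : R * R => snd z) pair).
    apply continuous_fst. apply continuous_snd.
    intros Q [e He]. exists e. intros z Hz. apply He. exact Hz.
    apply continuous_const. intros Q [e He]. exists e. intros z Hz. apply He. exact Hz.
  - apply H.
Qed.

Lemma c3_x_st (F : R -> R -> R -> R) : cont3 F -> jcont (P := prod_UniformSpace R_UniformSpace R_UniformSpace) (fun x p => F x (fst p) (snd p)).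
Proof.
  intros H x [s t]. apply (continuous_comp (fun z : R * (R * R) => (fst z, fst (snd z), snd (snd z))) (fun p : R * R * R => F (fst (fst p)) (snd (fst p)) (snd p))).
  - apply (continuous_comp_2 (fun z : R * (R * R) => (fst z, fst (snd z))) (fun z : R * (R * R) => snd (snd z)) pair).
    apply (continuous_comp_2 (fun z : R * (R * R) => fst z) (fun z : R * (R * R) => fst (snd z)) pair).
    apply continuous_fst. apply (continuous_comp (fun z : R * (R * R) => snd z) fst). apply continuous_snd. apply continuous_fst.
    intros Q [e He]. exists e. intros z Hz. apply He. exact Hz.
    apply (continuous_comp (fun z : R * (R * R) => snd z) snd). apply continuous_snd. apply continuous_snd.
    intros Q [e He]. exists e. intros z Hz. apply He. exact Hz.
  - apply H.
Qed.

Lemma c2_x_st (f : R -> R -> R) : cont2 f -> jcont (P := prod_UniformSpace R_UniformSpace R_UniformSpace) (fun x p => f x (snd p)).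
Proof.
  intros H x [s t]. apply (continuous_comp (fun z : R * (R * R) => (fst z, snd (snd z))) (fun p : R * R => f (fst p) (snd p))).
  - apply (continuous_comp_2 (fun z : R * (R * R) => fst z) (fun z : R * (R * R) => snd (snd z)) pair).
    apply continuous_fst. apply (continuous_comp (fun z : R * (R * R) => snd z) snd). apply continuous_snd. apply continuous_snd.
    intros Q [e He]. exists e. intros z Hz. apply He. exact Hz.
  - apply H.
Qed.

Lemma c2_x_s (f : R -> R -> R) : cont2 f -> jcont (P := R_UniformSpace) (fun x s => f x s).
Proof. intros H x s. apply H. Qed.

Lemma c2_x_const (f : R -> R -> R) t : cont2 f -> jcont (P := R_UniformSpace) (fun x (_ : R) => f x t).
Proof.
  intros H x s. apply (continuous_comp (fun z : R * R => (fst z, t)) (fun p : R * R => f (fst p) (snd p))).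
  - apply (continuous_comp_2 (fun z : R * R => fst z) (fun _ => t) pair).
    apply continuous_fst. apply continuous_const.
    intros Q [e He]. exists e. intros z Hz. apply He. exact Hz.
  - apply H.
Qed.

Lemma jcont_c2 (k : R -> R -> R) : jcont (P := R_UniformSpace) k -> c2 k.
Proof. intros H x y. apply continuity_2d_pt_filterlim. apply H. Qed.

Lemma jcont_snd (f : R -> R) : (forall s, continuous f s) -> jcont (P := R_UniformSpace) (fun _ s => f s).
Proof. intros H x s. apply (continuous_comp (fun z : R * R => snd z) f). apply continuous_snd. apply H. Qed.

Lemma jcont_comp1 (k : R -> R -> R) (c : R -> R) : (forall x, continuous c x) -> jcont (P := R_UniformSpace) k ->
  jcont (P := R_UniformSpace) (fun x s => k (c x) s).
Proof.
  intros Hc H x s. apply (continuous_comp (fun z : R * R => (c (fst z), snd z)) (fun p : R * R => k (fst p) (snd p))).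
  - apply (continuous_comp_2 (fun z : R * R => c (fst z)) (fun z : R * R => snd z) pair).
    apply (continuous_comp (fun z : R * R => fst z) c). apply continuous_fst. apply Hc.
    apply continuous_snd. intros Q [e He]. exists e. intros z Hz. apply He. exact Hz.
  - apply H.
Qed.

Lemma Rmax_alt a b : Rmax a b = (a + b + Rabs (a - b)) / 2.
Proof. unfold Rmax. destruct (Rle_dec a b). rewrite Rabs_left1 by lra. field. rewrite Rabs_right by lra. field. Qed.
Lemma Rmin_alt a b : Rmin a b = (a + b - Rabs (a - b)) / 2.
Proof. unfold Rmin. destruct (Rle_dec a b). rewrite Rabs_left1 by lra. field. rewrite Rabs_right by lra. field. Qed.

Lemma cont_absR (f : R -> R) x : continuous f x -> continuous (fun y => Rabs (f y)) x.
Proof. intros H. apply (continuous_comp f Rabs). exact H. apply continuous_Rabs. Qed.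

Lemma cont_Rmax (f g : R -> R) x : continuous f x -> continuous g x -> continuous (fun y => Rmax (f y) (g y)) x.
Proof.
  intros Hf Hg.
  apply (continuous_ext (fun y => (f y + g y + Rabs (f y - g y)) * / 2)). intros; rewrite Rmax_alt; auto.
  apply cont_mulR. apply cont_plusR. apply cont_plusR; auto. apply cont_absR. apply cont_minusR; auto. apply cont_constR.
Qed.
Lemma cont_Rmin (f g : R -> R) x : continuous f x -> continuous g x -> continuous (fun y => Rmin (f y) (g y)) x.
Proof.
  intros Hf Hg.
  apply (continuous_ext (fun y => (f y + g y - Rabs (f y - g y)) * / 2)). intros; rewrite Rmin_alt; auto.
  apply cont_mulR. apply cont_minusR. apply cont_plusR; auto. apply cont_absR. apply cont_minusR; auto. apply cont_constR.
Qed.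

Definition cl (x : R) := Rmax 0 (Rmin PI x).
Lemma cl_cont x : continuous cl x.
Proof. unfold cl. apply cont_Rmax. apply cont_constR. apply cont_Rmin. apply cont_constR. apply cont_idR. Qed.
Lemma cl_range x : 0 <= cl x <= PI.
Proof. unfold cl. pose proof PI_RGT_0. unfold Rmax, Rmin. repeat destruct Rle_dec; lra. Qed.
Lemma cl_in x : 0 <= x <= PI -> cl x = x.
Proof. intros H. unfold cl. unfold Rmax, Rmin. repeat destruct Rle_dec; lra. Qed.

Lemma c3_x_t (F : R -> R -> R -> R) s : cont3 F -> jcont (P := R_UniformSpace) (fun x t => F x s t).
Proof.
  intros H x t. apply (continuous_comp (fun z : R * R => (fst z, s, snd z)) (fun p : R * R * R => F (fst (fst p)) (snd (fst p)) (snd p))).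
  - apply (continuous_comp_2 (fun z : R * R => (fst z, s)) (fun z : R * R => snd z) pair).
    apply (continuous_comp_2 (fun z : R * R => fst z) (fun _ => s) pair).
    apply continuous_fst. apply continuous_const.
    intros Q [e He]. exists e. intros z Hz. apply He. exact Hz.
    apply continuous_snd. intros Q [e He]. exists e. intros z Hz. apply He. exact Hz.
  - apply H.
Qed.

Lemma swap_cont (p : R * R) : continuous (fun z : R * R => (snd z, fst z)) p.
Proof.
  destruct p as [x y].
  apply (continuous_comp_2 (fun z : R * R => snd z) (fun z : R * R => fst z) pair).
  apply continuous_snd. apply continuous_fst.
  intros Q [e He]. exists e. intros z Hz. apply He. exact Hz.
Qed.

Lemma jcont_1R (F : R -> R -> R) p x : jcont (P := R_UniformSpace) F -> continuous (fun y => F y p) x.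
Proof. apply jcont_1. Qed.

Lemma jcont_fst (f : R -> R) : (forall x, continuous f x) -> jcont (P := R_UniformSpace) (fun x (_ : R) => f x).
Proof. intros H x s. apply (continuous_comp (fun z : R * R => fst z) f). apply continuous_fst. apply H. Qed.

Lemma IG_zero : IG (fun _ => 0) 0.
Proof.
  apply lim_to_IG. intros; apply ex_RInt_contR; intros; apply cont_constR.
  apply (filterlim_ext (fun _ => 0)). intros b. rewrite (RInt_const (V := R_CompleteNormedModule)).
  simpl. unfold scal; simpl; unfold mult; simpl. ring. apply lim_const.
Qed.

Lemma lim_squeeze0 (f g : R -> R) C : filterlim g pinf (locally 0) ->
  pinf (fun y => Rabs (f y) <= C * Rabs (g y)) -> filterlim f pinf (locally 0).
Proof.
  intros Hg Hb. apply filterlim_locally. intros eps.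
  assert (He : 0 < eps / (Rabs C + 1)) by (apply Rdiv_lt_0_compat; [apply cond_pos| pose proof (Rabs_pos C); lra]).
  apply filterlim_locally with (eps := mkposreal _ He) in Hg.
  generalize (filter_and _ _ Hg Hb). apply filter_imp. intros y [H1 H2].
  change (Rabs (g y - 0) < eps / (Rabs C + 1)) in H1. apply ball_R. rewrite Rminus_0_r in *.
  assert (C * Rabs (g y) <= Rabs C * Rabs (g y)) by (apply Rmult_le_compat_r; [apply Rabs_pos| apply Rle_abs]).
  assert (Rabs C * Rabs (g y) <= Rabs C * (eps / (Rabs C + 1))) by (apply Rmult_le_compat_l; [apply Rabs_pos| lra]).
  assert (Rabs C * (eps / (Rabs C + 1)) < eps).
  { apply Rlt_le_trans with ((Rabs C + 1) * (eps / (Rabs C + 1))).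
    apply Rmult_lt_compat_r; [exact He| lra]. right; field. pose proof (Rabs_pos C); lra. }
  lra.
Qed.

Lemma jcont_2 {P : UniformSpace} (F : R -> P -> R) x p : jcont F -> continuous (fun q => F x q) p.
Proof.
  intros H. apply (continuous_comp (fun q => (x, q)) (fun z : R * P => F (fst z) (snd z))).
  - apply (continuous_comp_2 (fun _ : P => x) (fun q : P => q) pair).
    apply continuous_const. apply continuous_id.
    intros Q [e He]. exists e. intros z Hz. apply He. exact Hz.
  - apply H.
Qed.


Lemma young_pt (a u v : R) : 0 < a -> Rabs (u * v) <= (a * (u * u) + (v * v) / a) / 2.
Proof.
  intros Ha.
  assert (H1 : 0 <= (a * u - v) * (a * u - v) / a) by (apply Rdiv_le_0_compat; [pose proof (Rle_0_sqr (a * u - v)); unfold Rsqr in *; lra|lra]).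
  assert (H2 : 0 <= (a * u + v) * (a * u + v) / a) by (apply Rdiv_le_0_compat; [pose proof (Rle_0_sqr (a * u + v)); unfold Rsqr in *; lra|lra]).
  assert (E1 : (a * u - v) * (a * u - v) / a = a * (u * u) + v * v / a - 2 * (u * v)) by (field; lra).
  assert (E2 : (a * u + v) * (a * u + v) / a = a * (u * u) + v * v / a + 2 * (u * v)) by (field; lra).
  apply Rabs_le. lra.
Qed.

Lemma young_int (f g : R -> R) a A B : 0 < a -> A <= B ->
  (forall x, continuous f x) -> (forall x, continuous g x) ->
  Rabs (RInt (fun x => f x * g x) A B) <=
    (a * RInt (fun x => f x * f x) A B + RInt (fun x => g x * g x) A B / a) / 2.
Proof.
  intros Ha HAB Hf Hg.
  assert (Ex : forall h : R -> R, (forall x, continuous h x) -> ex_RInt h A B) by (intros h Hh; apply ex_RInt_contR; auto).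
  assert (Cfg : forall x, continuous (fun x => f x * g x) x) by (intros; apply cont_mulR; auto).
  assert (Cff : forall x, continuous (fun x => f x * f x) x) by (intros; apply cont_mulR; auto).
  assert (Cgg : forall x, continuous (fun x => g x * g x) x) by (intros; apply cont_mulR; auto).
  eapply Rle_trans. apply (RInt_abs_le (fun x => f x * g x) (fun x => (a * (f x * f x) + (g x * g x) / a) / 2) A B HAB).
  apply Ex; auto. apply Ex. intros x. apply cont_mulR. apply cont_plusR. apply cont_mulR. apply cont_constR. auto.
  apply cont_mulR. auto. apply cont_constR. apply cont_constR.
  intros x _. apply young_pt. exact Ha.
  right.
  rewrite (RInt_extR _ (fun x => / 2 * (a * (f x * f x) + / a * (g x * g x)))) by (intros; field; lra).
  rewrite RInt_scalR, RInt_plusR, !RInt_scalR; try apply Ex; auto.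
  field. lra.
  all: intros x; repeat (apply cont_mulR || apply cont_plusR || apply cont_constR); auto.
Qed.

Lemma CS_aux (x A B : R) : 0 < x -> 0 <= A + (-2 * (B / x) * B + (x - 0) * (B / x * (B / x))) -> B ^ 2 <= x * A.
Proof.
  intros Hx H. replace (A + (-2 * (B / x) * B + (x - 0) * (B / x * (B / x)))) with (A - B ^ 2 / x) in H by (field; lra).
  assert (B ^ 2 / x <= A) by lra.
  apply Rmult_le_reg_r with (/ x). apply Rinv_0_lt_compat; lra.
  replace (x * A * / x) with A by (field; lra). exact H0.
Qed.

Lemma CS_int (u : R -> R) x : 0 <= x -> (forall y, continuous u y) ->
  (RInt u 0 x) ^ 2 <= x * RInt (fun y => u y * u y) 0 x.
Proof.
  intros Hx Hu.
  assert (Ex : forall h : R -> R, (forall x, continuous h x) -> ex_RInt h 0 x) by (intros h Hh; apply ex_RInt_contR; auto).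
  destruct (Req_dec x 0) as [->|Hx0].
  - rewrite RInt_point_R. simpl. lra.
  - set (m := RInt u 0 x / x).
    assert (H : 0 <= RInt (fun y => (u y - m) * (u y - m)) 0 x).
    { apply RInt_ge_0. lra. apply Ex. intros; apply cont_mulR; apply cont_minusR; auto; apply cont_constR.
      intros y _. pose proof (Rle_0_sqr (u y - m)); unfold Rsqr in *; lra. }
    rewrite (RInt_extR _ (fun y => u y * u y + ((-2 * m) * u y + m * m))) in H by (intros; ring).
    assert (E1 : ex_RInt (fun y => u y * u y) 0 x) by (apply Ex; intros; apply cont_mulR; auto).
    assert (E2 : ex_RInt u 0 x) by (apply Ex; auto).
    assert (E3 : ex_RInt (fun y => (-2 * m) * u y) 0 x) by (apply ex_RInt_scalR; auto).
    assert (E4 : ex_RInt (fun _ => m * m) 0 x) by (apply Ex; intros; apply cont_constR).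
    rewrite RInt_plusR in H; auto. 2: apply ex_RInt_plusR; auto.
    rewrite RInt_plusR in H; auto. rewrite RInt_scalR in H; auto.
    rewrite (RInt_const (V := R_CompleteNormedModule)) in H. simpl in H. unfold scal in H; simpl in H; unfold mult in H; simpl in H.
    unfold m in H.
    assert (Hxp : 0 < x) by lra.
    revert H. apply CS_aux. exact Hxp.
Qed.

Lemma RInt_derive_R (f df : R -> R) a b : (forall x, is_derive f x (df x)) -> (forall x, continuous df x) ->
  RInt df a b = f b - f a.
Proof.
  intros Hd Hc. apply is_RInt_uniqueR.
  apply (is_RInt_derive (V := R_CompleteNormedModule) f df a b); intros; auto.
Qed.

Lemma sum0 (a b : R) : a + b = 0 - 0 -> a = - b.
Proof. intros; lra. Qed.

Lemma ibp_x (f f' g g' : R -> R) :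
  (forall x, is_derive f x (f' x)) -> (forall x, is_derive g x (g' x)) ->
  (forall x, continuous f' x) -> (forall x, continuous g' x) -> g 0 = 0 -> g PI = 0 ->
  RInt (fun x => f' x * g x) 0 PI = - RInt (fun x => f x * g' x) 0 PI.
Proof.
  intros Hf Hg Hf' Hg' H0 HP.
  assert (Cf : forall x, continuous f x) by (intros; apply cont_exd; eexists; apply Hf).
  assert (Cg : forall x, continuous g x) by (intros; apply cont_exd; eexists; apply Hg).
  assert (E := RInt_derive_R (fun x => f x * g x) (fun x => f' x * g x + f x * g' x) 0 PI).
  rewrite RInt_plusR in E. rewrite H0, HP, !Rmult_0_r in E. apply sum0 in E. exact E.
  - intros x. apply (is_derive_ext (fun x => mult (f x) (g x))). reflexivity.
    eapply filterdiff_ext_lin. apply (is_derive_mult f g x); auto. intros; apply Rmult_comm.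
    intros y. simpl. unfold scal, plus, mult; simpl. unfold mult; simpl. ring.
  - intros x. apply cont_plusR; apply cont_mulR; auto.
  - apply ex_RInt_contR; intros; apply cont_mulR; auto.
  - apply ex_RInt_contR; intros; apply cont_mulR; auto.
Qed.

Lemma poincare (f f' : R -> R) :
  (forall x, is_derive f x (f' x)) -> (forall x, continuous f' x) -> f 0 = 0 ->
  RInt (fun x => f x * f x) 0 PI <= PI ^ 2 * RInt (fun x => f' x * f' x) 0 PI.
Proof.
  intros Hf Hf' H0. pose proof PI_RGT_0 as Hpi.
  assert (Cf : forall x, continuous f x) by (intros; apply cont_exd; eexists; apply Hf).
  set (I := RInt (fun x => f' x * f' x) 0 PI).
  assert (Hpt : forall x, 0 <= x <= PI -> f x * f x <= PI * I).
  { intros x Hx.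
    assert (Ef : f x = RInt f' 0 x) by (rewrite (RInt_derive_R f f'); auto; rewrite H0; ring).
    pose proof (CS_int f' x ltac:(lra) Hf') as Hcs. rewrite <- Ef in Hcs.
    assert (Hle : RInt (fun y => f' y * f' y) 0 x <= I).
    { unfold I. rewrite <- (RInt_Chasles_R _ 0 x PI).
      assert (0 <= RInt (fun y => f' y * f' y) x PI).
      { apply RInt_ge_0. lra. apply ex_RInt_contR; intros; apply cont_mulR; auto.
        intros y _. pose proof (Rle_0_sqr (f' y)); unfold Rsqr in *; lra. }
      lra. all: apply ex_RInt_contR; intros; apply cont_mulR; auto. }
    assert (0 <= RInt (fun y => f' y * f' y) 0 x).
    { apply RInt_ge_0. lra. apply ex_RInt_contR; intros; apply cont_mulR; auto.
      intros y _. pose proof (Rle_0_sqr (f' y)); unfold Rsqr in *; lra. }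
    simpl in Hcs. replace (f x * f x) with (f x * (f x * 1)) by ring.
    eapply Rle_trans. exact Hcs. apply Rmult_le_compat; lra. }
  eapply Rle_trans. apply (RInt_le _ (fun _ => PI * I)). lra.
  apply ex_RInt_contR; intros; apply cont_mulR; auto.
  apply ex_RInt_contR; intros; apply cont_constR.
  intros x Hx. apply Hpt. lra.
  rewrite (RInt_const (V := R_CompleteNormedModule)). simpl. unfold scal; simpl; unfold mult; simpl. right; ring.
Qed.


Section Sol.
Variables (rho J c mu b alpha xi beta delta : R) (kappa : R -> R)
  (u phi theta : R -> R -> R) (eta : R -> R -> R -> R).
Hypothesis Hc : 0 < c.
Hypothesis HK : kernel_hyp kappa delta.
Hypothesis Hsol : is_solution rho J c mu b alpha xi beta kappa u phi theta eta.
Variable t0 : R.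
Hypothesis Ht0 : 0 < t0.

Lemma Cphi : C2 phi. Proof. destruct Hsol as [_ [H _]]. exact H. Qed.
Lemma Ctheta : C2 theta. Proof. destruct Hsol as [_ [_ [H _]]]. exact H. Qed.
Lemma Ceta : eta_regular eta. Proof. destruct Hsol as [_ [_ [_ [H _]]]]. exact H. Qed.

Lemma th_dt x t : ex_derive (fun y => theta x y) t. Proof. destruct Ctheta as [_ [H _]]. apply H. Qed.
Lemma th_c : cont2 theta. Proof. destruct Ctheta as [_ [_ [_ [_ [_ [_ [H _]]]]]]]. exact H. Qed.
Lemma tht_c : cont2 (dt theta). Proof. destruct Ctheta as [_ [_ [_ [_ [_ [_ [_ [_ [H _]]]]]]]]]. exact H. Qed.
Lemma ph_c : cont2 phi. Proof. destruct Cphi as [_ [_ [_ [_ [_ [_ [H _]]]]]]]. exact H. Qed.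
Lemma pht_c : cont2 (dt phi). Proof. destruct Cphi as [_ [_ [_ [_ [_ [_ [_ [_ [H _]]]]]]]]]. exact H. Qed.
Lemma e_dx x s t : ex_derive (fun y => eta y s t) x. Proof. destruct Ceta as [H _]. apply H. Qed.
Lemma ex_dx x s t : ex_derive (fun y => dx3 eta y s t) x. Proof. destruct Ceta as [_ [H _]]. apply H. Qed.
Lemma e_ds x s t : ex_derive (fun y => eta x y t) s. Proof. destruct Ceta as [_ [_ [H _]]]. apply H. Qed.
Lemma e_dt x s t : ex_derive (fun y => eta x s y) t. Proof. destruct Ceta as [_ [_ [_ [H _]]]]. apply H. Qed.
Lemma e_c : cont3 eta. Proof. destruct Ceta as [_ [_ [_ [_ [H _]]]]]. exact H. Qed.
Lemma ex_c : cont3 (dx3 eta). Proof. destruct Ceta as [_ [_ [_ [_ [_ [H _]]]]]]. exact H. Qed.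
Lemma exx_c : cont3 (dx3 (dx3 eta)). Proof. destruct Ceta as [_ [_ [_ [_ [_ [_ [H _]]]]]]]. exact H. Qed.
Lemma es_c : cont3 (ds3 eta). Proof. destruct Ceta as [_ [_ [_ [_ [_ [_ [_ [H _]]]]]]]]. exact H. Qed.
Lemma et_c : cont3 (dt3 eta). Proof. destruct Ceta as [_ [_ [_ [_ [_ [_ [_ [_ [H _]]]]]]]]]. exact H. Qed.

Lemma e_bounds : exists B, 0 <= B /\ forall x s t, 0 <= x <= PI -> 0 <= s -> 0 < t <= 2 * t0 ->
     Rabs (eta x s t) <= B * (1 + s) /\
     Rabs (dx3 eta x s t) <= B * (1 + s) /\
     Rabs (dx3 (dx3 eta) x s t) <= B * (1 + s) /\
     Rabs (ds3 eta x s t) <= B * (1 + s) /\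
     Rabs (dt3 eta x s t) <= B * (1 + s).
Proof.
  destruct Ceta as [_ [_ [_ [_ [_ [_ [_ [_ [_ H]]]]]]]]].
  destruct (H (2 * t0) ltac:(lra)) as [B HB]. exists B. split; auto.
  destruct (HB 0 0 t0 ltac:(pose proof PI_RGT_0; lra) ltac:(lra) ltac:(lra)) as [H1 _].
  pose proof (Rabs_pos (eta 0 0 t0)). lra.
Qed.

Lemma eq_theta x t : 0 < x < PI -> 0 < t ->
  c * dt theta x t = - beta * dt (dx phi) x t + Iinf (fun s => kappa s * dx3 (dx3 eta) x s t).
Proof. intros. destruct Hsol as [_ [_ [_ [_ [_ [_ [Hq _]]]]]]]. apply Hq; auto. Qed.
Lemma eq_eta x s t : 0 < x < PI -> 0 < s -> 0 < t -> dt3 eta x s t = theta x t - ds3 eta x s t.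
Proof. intros. destruct Hsol as [_ [_ [_ [_ [_ [_ [_ [Hq _]]]]]]]]. apply Hq; auto. Qed.
Lemma bc_eta s t : 0 <= s -> 0 < t -> eta 0 s t = 0 /\ eta PI s t = 0.
Proof. intros. destruct Hsol as [_ [_ [_ [_ [_ [_ [_ [_ [_ [Hq _]]]]]]]]]]. apply Hq; auto. Qed.
Lemma eta_s0 x t : 0 < t -> eta x 0 t = 0.
Proof. intros. destruct Hsol as [_ [_ [_ [_ [_ [_ [_ [_ [_ [_ Hq]]]]]]]]]]. apply Hq; auto. Qed.

Lemma is_derive_scalR (f : R -> R) k x l : is_derive f x l -> is_derive (fun y => k * f y) x (k * l).
Proof. intros H. apply (is_derive_scal f x k l H). Qed.

Lemma ex_derive_multR (f g : R -> R) x : ex_derive f x -> ex_derive g x -> ex_derive (fun y => f y * g y) x.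
Proof. intros Hf Hg. apply (ex_derive_mult f g x Hf Hg). Qed.

Definition hh s tau := kappa s * ip (fun x => theta x tau) (fun x => eta x s tau).
Definition hd s tau := kappa s * RInt (fun x => dt theta x tau * eta x s tau + theta x tau * dt3 eta x s tau) 0 PI.

Lemma jc_hd_int s : jcont (P := R_UniformSpace) (fun x t => dt theta x t * eta x s t + theta x t * dt3 eta x s t).
Proof.
  apply jcont_plus; apply jcont_mult.
  apply c2_x_s, tht_c. apply c3_x_t, e_c. apply c2_x_s, th_c. apply c3_x_t, et_c.
Qed.

Lemma hh_der s tau : is_derive (fun z => hh s z) tau (hd s tau).
Proof.
  unfold hh, hd, ip.
  apply is_derive_scalR.
  assert (HD : forall x z, Derive (fun u => theta x u * eta x s u) z = dt theta x z * eta x s z + theta x z * dt3 eta x s z).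
  { intros x z. rewrite Derive_mult. reflexivity. apply th_dt. apply e_dt. }
  rewrite (RInt_extR _ (fun x => Derive (fun u => theta x u * eta x s u) tau)) by (intros; rewrite HD; reflexivity).
  apply (is_derive_RInt_param (fun z x => theta x z * eta x s z) 0 PI tau).
  - exists (mkposreal 1 Rlt_0_1). intros z _ t _. apply ex_derive_multR. exact (th_dt t z). exact (e_dt t s z).
  - intros t _. apply continuity_2d_pt_ext with (fun u v => dt theta v u * eta v s u + theta v u * dt3 eta v s u).
    intros; rewrite HD; reflexivity.
    exact (c2_swap _ (jcont_c2 _ (jc_hd_int s)) tau t).
  - exists (mkposreal 1 Rlt_0_1). intros z _.
    apply (jcont_ex_RInt (P := R_UniformSpace) (fun x t => theta x t * eta x s t) z).
    apply jcont_mult. apply c2_x_s, th_c. apply c3_x_t, e_c.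
Qed.

Lemma cont_mulU {U : UniformSpace} (f g : U -> R) x : continuous f x -> continuous g x -> continuous (fun y => f y * g y) x.
Proof. intros Hf Hg. apply (continuous_mult f g x Hf Hg). Qed.

Lemma hd_cont s tau : 0 <= s -> continuity_2d_pt (fun u v => hd v u) tau s.
Proof.
  intros Hs. apply continuity_2d_pt_filterlim. unfold hd.
  set (I2 := fun p : R * R => RInt (fun x => dt theta x (snd p) * eta x (fst p) (snd p) + theta x (snd p) * dt3 eta x (fst p) (snd p)) 0 PI).
  change (continuous (fun z : R * R => kappa (snd z) * I2 (snd z, fst z)) (tau, s)).
  apply (cont_mulU (fun z : R * R => kappa (snd z)) (fun z : R * R => I2 (snd z, fst z))).
  - apply (continuous_comp (fun z : R * R => snd z) kappa). apply continuous_snd. apply (k_cont kappa delta HK). exact Hs.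
  - apply (continuous_comp (fun z : R * R => (snd z, fst z)) I2).
    apply swap_cont.
    apply (param_cont (P := prod_UniformSpace R_UniformSpace R_UniformSpace)
       (fun x p => dt theta x (snd p) * eta x (fst p) (snd p) + theta x (snd p) * dt3 eta x (fst p) (snd p))).
    left; apply PI_RGT_0.
    apply jcont_plus; apply jcont_mult.
    apply c2_x_st, tht_c. apply c3_x_st, e_c. apply c2_x_st, th_c. apply c3_x_st, et_c.
Qed.

Lemma hh_ex tau bb : 0 <= bb -> ex_RInt (fun s => hh s tau) 0 bb.
Proof.
  intros Hb. apply ex_RInt_contR. intros z Hz. rewrite Rmin_left in Hz by lra.
  unfold hh, ip. apply cont_mulR. apply (k_cont kappa delta HK). lra.
  apply (param_cont (P := R_UniformSpace) (fun x s => theta x tau * eta x s tau)). left; apply PI_RGT_0.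
  apply jcont_mult. apply c2_x_const, th_c. apply c3_x_s, e_c.
Qed.

Lemma hh_bound : exists G, 0 <= G /\ forall s tau, 0 <= s -> t0 - t0 / 2 < tau < t0 + t0 / 2 ->
  Rabs (hh s tau) <= G * kp kappa 1 s /\ Rabs (hd s tau) <= G * kp kappa 1 s.
Proof.
  destruct e_bounds as [B [HB0 HB]].
  set (A2 := fun tau => RInt (fun x => Rabs (dt theta x tau) + Rabs (theta x tau)) 0 PI).
  assert (HA2c : forall tau, continuous A2 tau).
  { intros tau. apply (param_cont (P := R_UniformSpace) (fun x t => Rabs (dt theta x t) + Rabs (theta x t))).
    left; apply PI_RGT_0. apply jcont_plus; apply jcont_abs. apply c2_x_s, tht_c. apply c2_x_s, th_c. }
  assert (HA2e : forall tau, ex_RInt (fun x => Rabs (dt theta x tau) + Rabs (theta x tau)) 0 PI).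
  { intros tau. apply (jcont_ex_RInt (P := R_UniformSpace) (fun x t => Rabs (dt theta x t) + Rabs (theta x t)) tau).
    apply jcont_plus; apply jcont_abs. apply c2_x_s, tht_c. apply c2_x_s, th_c. }
  destruct (continuity_ab_maj A2 (t0 - t0 / 2) (t0 + t0 / 2) ltac:(lra)) as [Mx [HMx _]].
  { intros z _. apply continuity_pt_filterlim. apply HA2c. }
  assert (HM0 : 0 <= A2 Mx).
  { apply RInt_ge_0. left; apply PI_RGT_0. apply HA2e. intros x _. pose proof (Rabs_pos (dt theta x Mx)). pose proof (Rabs_pos (theta x Mx)). lra. }
  exists (B * A2 Mx). split. apply Rmult_le_pos; auto.
  intros s tau Hs Ht.
  assert (Hk : 0 < kappa s) by (apply (k_pos kappa delta HK); auto).
  assert (Hgen : forall F : R -> R, ex_RInt F 0 PI ->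
     (forall x, 0 <= x <= PI -> Rabs (F x) <= B * (1 + s) * (Rabs (dt theta x tau) + Rabs (theta x tau))) ->
     Rabs (kappa s * RInt F 0 PI) <= B * A2 Mx * kp kappa 1 s).
  { intros F HF HFb. rewrite Rabs_mult, (Rabs_right (kappa s)) by lra.
    unfold kp. simpl. rewrite Rmult_1_r.
    assert (Rabs (RInt F 0 PI) <= B * (1 + s) * A2 tau).
    { unfold A2. rewrite <- RInt_scalR by apply HA2e. apply RInt_abs_le. left; apply PI_RGT_0. exact HF.
      apply ex_RInt_scalR. apply HA2e. exact HFb. }
    assert (A2 tau <= A2 Mx) by (apply HMx; lra).
    assert (B * (1 + s) * A2 tau <= B * (1 + s) * A2 Mx) by (apply Rmult_le_compat_l; [apply Rmult_le_pos; lra| lra]).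
    replace (B * A2 Mx * (kappa s * (1 + s))) with (kappa s * (B * (1 + s) * A2 Mx)) by ring.
    apply Rmult_le_compat_l; lra. }
  split.
  - unfold hh, ip. apply Hgen.
    apply (jcont_ex_RInt (P := R_UniformSpace) (fun x t => theta x t * eta x s t) tau).
    apply jcont_mult. apply c2_x_s, th_c. apply c3_x_t, e_c.
    intros x Hx. destruct (HB x s tau Hx Hs ltac:(lra)) as [H1 _].
    rewrite Rabs_mult. pose proof (Rabs_pos (dt theta x tau)). pose proof (Rabs_pos (theta x tau)).
    pose proof (Rabs_pos (eta x s tau)).
    apply Rle_trans with (Rabs (theta x tau) * (B * (1 + s))). apply Rmult_le_compat_l; lra.
    nra.
  - unfold hd. apply Hgen.
    apply (jcont_ex_RInt (P := R_UniformSpace) (fun x t => dt theta x t * eta x s t + theta x t * dt3 eta x s t) tau). apply jc_hd_int.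
    intros x Hx. destruct (HB x s tau Hx Hs ltac:(lra)) as [H1 [_ [_ [_ H5]]]].
    eapply Rle_trans. apply Rabs_triang. rewrite !Rabs_mult.
    pose proof (Rabs_pos (dt theta x tau)). pose proof (Rabs_pos (theta x tau)).
    pose proof (Rabs_pos (eta x s tau)). pose proof (Rabs_pos (dt3 eta x s tau)).
    apply Rle_trans with (Rabs (dt theta x tau) * (B * (1 + s)) + Rabs (theta x tau) * (B * (1 + s))).
    apply Rplus_le_compat; apply Rmult_le_compat_l; lra. nra.
Qed.

Lemma F1_deriv : is_derive (F1 c kappa theta eta) t0 (- (2 * c / g0 kappa) * Iinf (fun s => hd s t0)).
Proof.
  destruct hh_bound as [G [HG0 HG]].
  destruct (IG_kp1 kappa delta HK) as [l1 Hl1].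
  apply is_derive_scalR.
  apply (deriv_IG hh hd (fun s => G * kp kappa 1 s) (G * l1) t0 (t0 / 2)).
  - lra.
  - intros; apply hh_der.
  - intros; apply hd_cont; auto.
  - intros; apply hh_ex; auto.
  - intros s tau Hs Ht. apply HG; [exact Hs | exact Ht].
  - intros; apply ex_RInt_scalR; apply (ex_kp kappa delta HK); auto.
  - apply IG_scal. exact Hl1.
Qed.

Definition NN s := nrm2 (fun x => dx3 eta x s t0).

Lemma NN_eq s : NN s = RInt (fun x => dx3 eta x s t0 * dx3 eta x s t0) 0 PI.
Proof. reflexivity. Qed.

Lemma jc_NN : jcont (P := R_UniformSpace) (fun x s => dx3 eta x s t0 * dx3 eta x s t0).
Proof. apply jcont_mult; apply c3_x_s, ex_c. Qed.

Lemma NN_cont s : continuous NN s.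
Proof. unfold NN, nrm2, ip. apply (param_cont (P := R_UniformSpace) _ 0 PI s). left; apply PI_RGT_0. exact jc_NN. Qed.

Lemma NN_pos s : 0 <= NN s.
Proof.
  rewrite NN_eq. apply RInt_ge_0. left; apply PI_RGT_0.
  apply (jcont_ex_RInt (P := R_UniformSpace) (fun x s => dx3 eta x s t0 * dx3 eta x s t0) s). exact jc_NN.
  intros x _. pose proof (Rle_0_sqr (dx3 eta x s t0)); unfold Rsqr in *; lra.
Qed.

Lemma NN_bound B : (forall x s t, 0 <= x <= PI -> 0 <= s -> 0 < t <= 2 * t0 -> Rabs (dx3 eta x s t) <= B * (1 + s)) ->
  forall s, 0 <= s -> NN s <= PI * B ^ 2 * (1 + s) ^ 2.
Proof.
  intros HB s Hs. rewrite NN_eq.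
  eapply Rle_trans. apply Rle_abs. eapply Rle_trans. apply abs_RInt_le_const with (M := B ^ 2 * (1 + s) ^ 2).
  left; apply PI_RGT_0.
  apply (jcont_ex_RInt (P := R_UniformSpace) (fun x s => dx3 eta x s t0 * dx3 eta x s t0) s). exact jc_NN.
  intros x Hx. specialize (HB x s t0 Hx Hs ltac:(lra)). rewrite Rabs_mult.
  pose proof (Rabs_pos (dx3 eta x s t0)).
  replace (B ^ 2 * (1 + s) ^ 2) with ((B * (1 + s)) * (B * (1 + s))) by ring.
  apply Rmult_le_compat; lra.
  right. ring.
Qed.

Lemma IG_V : IG (fun s => kappa s * NN s) (normV2 kappa eta t0).
Proof.
  destruct e_bounds as [B [HB0 HB]].
  destruct (IG_kp2 kappa delta HK) as [l2 Hl2].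
  unfold normV2. apply (IG_dom' _ (fun s => PI * B ^ 2 * kp kappa 2 s) (PI * B ^ 2 * l2)).
  - intros bb Hb. apply ex_RInt_contR. intros z Hz. rewrite Rmin_left in Hz by lra.
    apply cont_mulR. apply (k_cont kappa delta HK). lra. apply NN_cont.
  - intros; apply ex_RInt_scalR; apply (ex_kp kappa delta HK); auto.
  - intros s Hs. pose proof (k_pos kappa delta HK s Hs). pose proof (NN_pos s).
    rewrite Rabs_right by nra. unfold kp.
    pose proof (NN_bound B (fun x s t H1 H2 H3 => proj1 (proj2 (HB x s t H1 H2 H3))) s Hs).
    replace (PI * B ^ 2 * (kappa s * (1 + s) ^ 2)) with (kappa s * (PI * B ^ 2 * (1 + s) ^ 2)) by ring.
    apply Rmult_le_compat_l; lra.
  - apply IG_scal. exact Hl2.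
Qed.

Definition Kq := Iinf (fun s => Derive kappa s * NN s).

Lemma IG_K : IG (fun s => Derive kappa s * NN s) Kq.
Proof.
  destruct e_bounds as [B [HB0 HB]].
  destruct (IG_wk2 kappa delta HK) as [l2 Hl2].
  unfold Kq, Iinf. apply (IG_dom' _ (fun s => PI * B ^ 2 * wk kappa 2 s) (PI * B ^ 2 * l2)).
  - intros bb Hb. apply ex_RInt_contR. intros z Hz. rewrite Rmin_left in Hz by lra.
    apply cont_mulR. apply (k_dcont kappa delta HK). lra. apply NN_cont.
  - intros; apply ex_RInt_scalR; apply (ex_wk kappa delta HK); auto.
  - intros s Hs. pose proof (k_dneg kappa delta HK s Hs). pose proof (NN_pos s).
    rewrite Rabs_left1 by nra. unfold wk.
    pose proof (NN_bound B (fun x s t H1 H2 H3 => proj1 (proj2 (HB x s t H1 H2 H3))) s Hs).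
    replace (PI * B ^ 2 * (- Derive kappa s * (1 + s) ^ 2)) with (- Derive kappa s * (PI * B ^ 2 * (1 + s) ^ 2)) by ring.
    replace (- (Derive kappa s * NN s)) with (- Derive kappa s * NN s) by ring.
    apply Rmult_le_compat_l; lra.
  - apply IG_scal. exact Hl2.
Qed.

Lemma K_nonpos : Kq <= 0.
Proof.
  apply (IG_le (fun s => Derive kappa s * NN s) (fun _ => 0) _ 0). intros s Hs. pose proof (k_dneg kappa delta HK s Hs). pose proof (NN_pos s). nra.
  apply IG_K. apply IG_zero.
Qed.

Lemma V_nonneg : 0 <= normV2 kappa eta t0.
Proof.
  apply (IG_le (fun _ => 0) (fun s => kappa s * NN s) 0). intros s Hs. pose proof (k_pos kappa delta HK s Hs). pose proof (NN_pos s). nra.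
  apply IG_zero. apply IG_V.
Qed.

Lemma V_K : delta * normV2 kappa eta t0 <= - Kq.
Proof.
  assert (H := IG_le (fun s => delta * (kappa s * NN s)) (fun s => -1 * (Derive kappa s * NN s))
    (delta * normV2 kappa eta t0) (-1 * Kq)).
  replace (- Kq) with (-1 * Kq) by ring. apply H.
  - intros s Hs. pose proof (k_dle kappa delta HK s Hs). pose proof (NN_pos s). nra.
  - apply IG_scal. apply IG_V.
  - apply IG_scal. apply IG_K.
Qed.

Definition kt s := kappa (Rmax 0 s).
Lemma kt_cont s : continuous kt s.
Proof.
  unfold kt. apply (continuous_comp (fun y => Rmax 0 y) kappa).
  apply cont_Rmax. apply cont_constR. apply cont_idR.
  apply (k_cont kappa delta HK). apply Rmax_l.
Qed.
Lemma kt_eq s : 0 <= s -> kt s = kappa s.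
Proof. intros Hs. unfold kt. rewrite Rmax_right by lra. reflexivity. Qed.

Definition WW x := Iinf (fun sg => kappa sg * dx3 (dx3 eta) x sg t0).
Definition Rw s := RInt (fun x => WW x * eta x s t0) 0 PI.

Lemma ex_k_f (f : R -> R) bb : 0 <= bb -> (forall s, continuous f s) -> ex_RInt (fun s => kappa s * f s) 0 bb.
Proof.
  intros Hb Hf. apply ex_RInt_contR. intros z Hz. rewrite Rmin_left in Hz by lra.
  apply cont_mulR. apply (k_cont kappa delta HK). lra. apply Hf.
Qed.

Lemma IG_W x : 0 <= x <= PI -> IG (fun sg => kappa sg * dx3 (dx3 eta) x sg t0) (WW x).
Proof.
  intros Hx. destruct e_bounds as [B [HB0 HB]].
  destruct (IG_kp1 kappa delta HK) as [l1 Hl1].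
  unfold WW, Iinf. apply (IG_dom' _ (fun s => B * kp kappa 1 s) (B * l1)).
  - intros bb Hb. apply ex_k_f. auto. intros s. apply (jcont_2 (P := R_UniformSpace) (fun x s => dx3 (dx3 eta) x s t0)).
    apply c3_x_s, exx_c.
  - intros; apply ex_RInt_scalR; apply (ex_kp kappa delta HK); auto.
  - intros s Hs. pose proof (k_pos kappa delta HK s Hs). destruct (HB x s t0 Hx Hs ltac:(lra)) as [_ [_ [H3 _]]].
    rewrite Rabs_mult, (Rabs_right (kappa s)) by lra. unfold kp. simpl.
    replace (B * (kappa s * ((1 + s) * 1))) with (kappa s * (B * (1 + s))) by ring.
    apply Rmult_le_compat_l; lra.
  - apply IG_scal. exact Hl1.
Qed.

Lemma Q_main s : 0 <= s -> ex_RInt (fun x => WW x * eta x s t0) 0 PI /\ IG (fun sg => kappa sg * ip (fun x => dx3 eta x sg t0) (fun x => dx3 eta x s t0)) (- Rw s).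
Proof.
  intros Hs. destruct e_bounds as [B [HB0 HB]].
  destruct (IG_kp1 kappa delta HK) as [l1 Hl1].
  set (k := fun x sg => kt sg * dx3 (dx3 eta) (cl x) sg t0 * eta (cl x) s t0).
  assert (Hk : c2 k).
  { apply jcont_c2. unfold k. apply jcont_mult. apply jcont_mult.
    apply jcont_snd. apply kt_cont.
    apply (jcont_comp1 (fun x sg => dx3 (dx3 eta) x sg t0)). apply cl_cont. apply c3_x_s, exx_c.
    apply (jcont_comp1 (fun x (_ : R) => eta x s t0)). apply cl_cont.
    apply jcont_fst. intros y. apply (jcont_1 (P := R_UniformSpace) (fun x s => eta x s t0)). apply c3_x_s, e_c. }
  assert (Hb : forall x sg, 0 <= sg -> Rabs (k x sg) <= B * B * (1 + s) * kp kappa 1 sg).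
  { intros x sg Hsg. unfold k. rewrite kt_eq by auto. pose proof (k_pos kappa delta HK sg Hsg).
    destruct (HB (cl x) sg t0 (cl_range x) Hsg ltac:(lra)) as [_ [_ [H3 _]]].
    destruct (HB (cl x) s t0 (cl_range x) Hs ltac:(lra)) as [H1 _].
    rewrite !Rabs_mult, (Rabs_right (kappa sg)) by lra. unfold kp. simpl.
    pose proof (Rabs_pos (dx3 (dx3 eta) (cl x) sg t0)). pose proof (Rabs_pos (eta (cl x) s t0)).
    replace (B * B * (1 + s) * (kappa sg * ((1 + sg) * 1))) with (kappa sg * ((B * (1 + sg)) * (B * (1 + s)))) by ring.
    rewrite Rmult_assoc. apply Rmult_le_compat_l. lra. apply Rmult_le_compat; lra. }
  destruct (GF k (fun sg => B * B * (1 + s) * kp kappa 1 sg) (B * B * (1 + s) * l1) 0 PI) as [Hex HIG].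
  - left; apply PI_RGT_0.
  - exact Hk.
  - intros; apply ex_RInt_scalR; apply (ex_kp kappa delta HK); auto.
  - apply IG_scal. exact Hl1.
  - exact Hb.
  - assert (HKx : forall x, 0 < x < PI -> RInt_gen (fun sg => k x sg) (at_point 0) pinf = WW x * eta x s t0).
    { intros x Hx. apply IG_unique.
      apply (IG_ext (fun sg => eta x s t0 * (kappa sg * dx3 (dx3 eta) x sg t0))).
      intros sg Hsg. unfold k. rewrite kt_eq by lra. rewrite cl_in by lra. ring.
      rewrite Rmult_comm. apply IG_scal. apply IG_W. lra. }
    assert (HexW : ex_RInt (fun x => WW x * eta x s t0) 0 PI).
    { apply (ex_RInt_ext (fun x => RInt_gen (fun sg => k x sg) (at_point 0) pinf)).
      intros x Hx. rewrite Rmin_left, Rmax_right in Hx by (pose proof PI_RGT_0; lra). apply HKx. exact Hx. exact Hex. }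
    split. exact HexW.
    assert (E1 : RInt (fun x => RInt_gen (fun sg => k x sg) (at_point 0) pinf) 0 PI = Rw s).
    { apply RInt_extR. intros x Hx. rewrite Rmin_left, Rmax_right in Hx by (pose proof PI_RGT_0; lra). apply HKx. exact Hx. }
    rewrite E1 in HIG.
    replace (- Rw s) with (-1 * Rw s) by ring.
    apply (IG_ext (fun sg => -1 * RInt (fun x => k x sg) 0 PI)).
    2: apply IG_scal; exact HIG.
    intros sg Hsg.
    assert (E2 : RInt (fun x => k x sg) 0 PI = kappa sg * RInt (fun x => dx3 (dx3 eta) x sg t0 * eta x s t0) 0 PI).
    { rewrite <- RInt_scalR. apply RInt_extR. intros x Hx. rewrite Rmin_left, Rmax_right in Hx by (pose proof PI_RGT_0; lra).
      unfold k. rewrite kt_eq by lra. rewrite cl_in by lra. ring.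
      apply (jcont_ex_RInt (P := R_UniformSpace) (fun x sg => dx3 (dx3 eta) x sg t0 * eta x s t0) sg).
      apply jcont_mult. apply c3_x_s, exx_c. apply jcont_fst. intros y. apply (jcont_1 (P := R_UniformSpace) (fun x s => eta x s t0)). apply c3_x_s, e_c. }
    rewrite E2.
    rewrite (ibp_x (fun x => dx3 eta x sg t0) (fun x => dx3 (dx3 eta) x sg t0) (fun x => eta x s t0) (fun x => dx3 eta x s t0)).
    unfold ip. ring.
    + intros x. apply Derive_correct. apply ex_dx.
    + intros x. apply Derive_correct. apply e_dx.
    + intros x. apply (jcont_1 (P := R_UniformSpace) (fun x sg => dx3 (dx3 eta) x sg t0)). apply c3_x_s, exx_c.
    + intros x. apply (jcont_1 (P := R_UniformSpace) (fun x s => dx3 eta x s t0)). apply c3_x_s, ex_c.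
    + apply (bc_eta s t0 Hs Ht0).
    + apply (bc_eta s t0 Hs Ht0).
Qed.

Definition Th := nrm2 (fun x => theta x t0).
Definition Ph := nrm2 (fun x => dt phi x t0).
Definition PP s := RInt (fun x => theta x t0 * eta x s t0) 0 PI.
Definition Pd s := RInt (fun x => theta x t0 * ds3 eta x s t0) 0 PI.
Definition EE s := RInt (fun x => dt phi x t0 * dx3 eta x s t0) 0 PI.

Lemma ph_dx x t : ex_derive (fun y => phi y t) x. Proof. destruct Cphi as [H _]. apply H. Qed.
Lemma ph_dt x t : ex_derive (fun y => phi x y) t. Proof. destruct Cphi as [_ [H _]]. apply H. Qed.
Lemma ph_dxt x t : ex_derive (fun y => dx phi x y) t. Proof. destruct Cphi as [_ [_ [_ [H _]]]]. apply H. Qed.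
Lemma ph_dtx x t : ex_derive (fun y => dt phi y t) x. Proof. destruct Cphi as [_ [_ [_ [_ [H _]]]]]. apply H. Qed.
Lemma ph_txc : cont2 (dt (dx phi)). Proof. destruct Cphi as [_ [_ [_ [_ [_ [_ [_ [_ [_ [_ [H _]]]]]]]]]]]. exact H. Qed.
Lemma ph_xtc : cont2 (dx (dt phi)). Proof. destruct Cphi as [_ [_ [_ [_ [_ [_ [_ [_ [_ [_ [_ [H _]]]]]]]]]]]]. exact H. Qed.

Lemma schwarz_phi x t : dt (dx phi) x t = dx (dt phi) x t.
Proof.
  symmetry. unfold dt, dx.
  apply (Schwarz phi x t).
  - exists (mkposreal 1 Rlt_0_1). intros u0 v0 _ _. split; [|split; [|split]].
    apply ph_dx. apply ph_dt. apply ph_dtx. apply ph_dxt.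
  - apply continuity_2d_pt_filterlim. apply ph_xtc.
  - apply continuity_2d_pt_filterlim. apply ph_txc.
Qed.

Lemma jc2 (f : R -> R -> R) : cont2 f -> jcont (P := R_UniformSpace) (fun x (_ : R) => f x t0).
Proof. intros H. apply c2_x_const. exact H. Qed.
Lemma jc3 (F : R -> R -> R -> R) : cont3 F -> jcont (P := R_UniformSpace) (fun x s => F x s t0).
Proof. intros H. apply c3_x_s. exact H. Qed.

Lemma pt_identity s : 0 < s ->
  c * hd s t0 + c * (kappa s * Pd s) = kappa s * (beta * EE s + Rw s + c * Th).
Proof.
  intros Hs. pose proof PI_RGT_0 as Hpi.
  destruct (Q_main s ltac:(lra)) as [HexW _].
  assert (EA : RInt (fun x => dt theta x t0 * eta x s t0 + theta x t0 * dt3 eta x s t0) 0 PI =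
     RInt (fun x => dt theta x t0 * eta x s t0) 0 PI + RInt (fun x => theta x t0 * dt3 eta x s t0) 0 PI).
  { apply RInt_plusR.
    apply (jcont_ex_RInt (P := R_UniformSpace) (fun x s => dt theta x t0 * eta x s t0) s). apply jcont_mult. apply jc2, tht_c. apply jc3, e_c.
    apply (jcont_ex_RInt (P := R_UniformSpace) (fun x s => theta x t0 * dt3 eta x s t0) s). apply jcont_mult. apply jc2, th_c. apply jc3, et_c. }
  assert (EB : RInt (fun x => theta x t0 * dt3 eta x s t0) 0 PI = Th - Pd s).
  { rewrite (RInt_extR _ (fun x => theta x t0 * theta x t0 - theta x t0 * ds3 eta x s t0)).
    apply RInt_minusR.
    apply (jcont_ex_RInt (P := R_UniformSpace) (fun x s => theta x t0 * theta x t0) s). apply jcont_mult; apply jc2, th_c.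
    apply (jcont_ex_RInt (P := R_UniformSpace) (fun x s => theta x t0 * ds3 eta x s t0) s). apply jcont_mult. apply jc2, th_c. apply jc3, es_c.
    intros x Hx. rewrite Rmin_left, Rmax_right in Hx by lra. rewrite eq_eta by lra. ring. }
  assert (ED : RInt (fun x => dt (dx phi) x t0 * eta x s t0) 0 PI = - EE s).
  { rewrite (RInt_extR _ (fun x => dx (dt phi) x t0 * eta x s t0)) by (intros; rewrite schwarz_phi; reflexivity).
    unfold EE. apply (ibp_x (fun x => dt phi x t0) (fun x => dx (dt phi) x t0) (fun x => eta x s t0) (fun x => dx3 eta x s t0)).
    - intros x. apply Derive_correct. apply ph_dtx.
    - intros x. apply Derive_correct. apply e_dx.
    - intros x. apply (jcont_1 (P := R_UniformSpace) (fun x (_ : R) => dx (dt phi) x t0) 0). apply jc2, ph_xtc.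
    - intros x. apply (jcont_1 (P := R_UniformSpace) (fun x s => dx3 eta x s t0) s). apply jc3, ex_c.
    - apply (bc_eta s t0 ltac:(lra) Ht0).
    - apply (bc_eta s t0 ltac:(lra) Ht0). }
  assert (EC : c * RInt (fun x => dt theta x t0 * eta x s t0) 0 PI = - beta * RInt (fun x => dt (dx phi) x t0 * eta x s t0) 0 PI + Rw s).
  { rewrite <- RInt_scalR.
    rewrite (RInt_extR _ (fun x => - beta * (dt (dx phi) x t0 * eta x s t0) + WW x * eta x s t0)).
    rewrite RInt_plusR. rewrite RInt_scalR. reflexivity.
    apply (jcont_ex_RInt (P := R_UniformSpace) (fun x s => dt (dx phi) x t0 * eta x s t0) s). apply jcont_mult. apply jc2, ph_txc. apply jc3, e_c.
    apply ex_RInt_scalR.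
    apply (jcont_ex_RInt (P := R_UniformSpace) (fun x s => dt (dx phi) x t0 * eta x s t0) s). apply jcont_mult. apply jc2, ph_txc. apply jc3, e_c.
    exact HexW.
    intros x Hx. rewrite Rmin_left, Rmax_right in Hx by lra.
    rewrite <- Rmult_assoc. rewrite eq_theta by lra. unfold WW. ring.
    apply (jcont_ex_RInt (P := R_UniformSpace) (fun x s => dt theta x t0 * eta x s t0) s). apply jcont_mult. apply jc2, tht_c. apply jc3, e_c. }
  unfold hd. rewrite EA, EB.
  replace (c * (kappa s * (RInt (fun x => dt theta x t0 * eta x s t0) 0 PI + (Th - Pd s))) + c * (kappa s * Pd s))
    with (kappa s * (c * RInt (fun x => dt theta x t0 * eta x s t0) 0 PI + c * Th)) by ring.
  rewrite EC, ED. ring.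
Qed.

Lemma jc_PP : jcont (P := R_UniformSpace) (fun x s => theta x t0 * eta x s t0).
Proof. apply jcont_mult. apply jc2, th_c. apply jc3, e_c. Qed.
Lemma jc_Pd : jcont (P := R_UniformSpace) (fun x s => theta x t0 * ds3 eta x s t0).
Proof. apply jcont_mult. apply jc2, th_c. apply jc3, es_c. Qed.

Lemma PP_cont s : continuous PP s.
Proof. apply (param_cont (P := R_UniformSpace) _ 0 PI s). left; apply PI_RGT_0. exact jc_PP. Qed.
Lemma Pd_cont s : continuous Pd s.
Proof. apply (param_cont (P := R_UniformSpace) _ 0 PI s). left; apply PI_RGT_0. exact jc_Pd. Qed.

Lemma PP_der s : is_derive PP s (Pd s).
Proof.
  unfold PP, Pd.
  assert (HD : forall x z, Derive (fun u => theta x t0 * eta x u t0) z = theta x t0 * ds3 eta x z t0).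
  { intros x z. rewrite Derive_scal. reflexivity. }
  rewrite (RInt_extR _ (fun x => Derive (fun u => theta x t0 * eta x u t0) s)) by (intros; rewrite HD; reflexivity).
  apply (is_derive_RInt_param (fun z x => theta x t0 * eta x z t0) 0 PI s).
  - exists (mkposreal 1 Rlt_0_1). intros z _ t _. apply ex_derive_multR. apply ex_derive_const. exact (e_ds t z t0).
  - intros t _. apply continuity_2d_pt_ext with (fun u v => theta v t0 * ds3 eta v u t0).
    intros; rewrite HD; reflexivity.
    exact (c2_swap _ (jcont_c2 _ jc_Pd) s t).
  - exists (mkposreal 1 Rlt_0_1). intros z _.
    apply (jcont_ex_RInt (P := R_UniformSpace) (fun x s => theta x t0 * eta x s t0) z). exact jc_PP.
Qed.

Lemma PP0 : PP 0 = 0.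
Proof.
  unfold PP. rewrite (RInt_extR _ (fun _ => 0)). rewrite (RInt_const (V := R_CompleteNormedModule)).
  simpl. unfold scal; simpl; unfold mult; simpl. ring.
  intros x _. rewrite eta_s0 by exact Ht0. ring.
Qed.

Lemma ibp_s Y : 0 <= Y -> RInt (fun s => Derive kappa s * PP s + kappa s * Pd s) 0 Y = kappa Y * PP Y.
Proof.
  intros HY.
  assert (H1 : forall x, Rmin 0 Y <= x <= Rmax 0 Y -> is_derive (fun s => kappa s * PP s) x (Derive kappa x * PP x + kappa x * Pd x)).
  { intros x Hx. rewrite Rmin_left, Rmax_right in Hx by lra.
    assert (Hk : is_derive kappa x (Derive kappa x)) by (apply Derive_correct; apply (k_der kappa delta HK); lra).
    generalize (is_derive_mult kappa PP x _ _ Hk (PP_der x) (fun a b => Rmult_comm a b)). intros Hm.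
    eapply is_derive_ext; [| eapply filterdiff_ext_lin; [apply Hm|]]. intros t. reflexivity.
    intros y. simpl. unfold scal, plus, mult; simpl. unfold mult; simpl. ring. }
  assert (H2 : forall x, Rmin 0 Y <= x <= Rmax 0 Y -> continuous (fun s => Derive kappa s * PP s + kappa s * Pd s) x).
  { intros x Hx. rewrite Rmin_left, Rmax_right in Hx by lra.
    apply cont_plusR; apply cont_mulR. apply (k_dcont kappa delta HK); lra. apply PP_cont.
    apply (k_cont kappa delta HK); lra. apply Pd_cont. }
  pose proof (is_RInt_derive (V := R_CompleteNormedModule) _ _ 0 Y H1 H2) as H.
  rewrite (is_RInt_uniqueR _ _ _ _ H). unfold minus, plus, opp; simpl. rewrite PP0. ring.
Qed.

Lemma RInt_kd Y : 0 <= Y -> RInt (Derive kappa) 0 Y = kappa Y - kappa 0.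
Proof.
  intros HY.
  assert (H1 : forall x, Rmin 0 Y <= x <= Rmax 0 Y -> is_derive kappa x (Derive kappa x)).
  { intros x Hx. rewrite Rmin_left, Rmax_right in Hx by lra. apply Derive_correct; apply (k_der kappa delta HK); lra. }
  assert (H2 : forall x, Rmin 0 Y <= x <= Rmax 0 Y -> continuous (Derive kappa) x).
  { intros x Hx. rewrite Rmin_left, Rmax_right in Hx by lra. apply (k_dcont kappa delta HK); lra. }
  pose proof (is_RInt_derive (V := R_CompleteNormedModule) _ _ 0 Y H1 H2) as H.
  rewrite (is_RInt_uniqueR _ _ _ _ H). unfold minus, plus, opp; simpl. ring.
Qed.

Lemma EE_bound bb s : 0 < bb -> Rabs (EE s) <= (bb * Ph + NN s / bb) / 2.
Proof.
  intros Hb. unfold EE, Ph, NN, nrm2, ip.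
  apply (young_int (fun x => dt phi x t0) (fun x => dx3 eta x s t0) bb 0 PI Hb).
  left; apply PI_RGT_0.
  intros x. apply (jcont_1 (P := R_UniformSpace) (fun x (_ : R) => dt phi x t0) 0). apply jc2, pht_c.
  intros x. apply (jcont_1 (P := R_UniformSpace) (fun x s => dx3 eta x s t0) s). apply jc3, ex_c.
Qed.

Lemma ip_bound sg s : ip (fun x => dx3 eta x sg t0) (fun x => dx3 eta x s t0) <= (NN sg + NN s) / 2.
Proof.
  eapply Rle_trans. apply Rle_abs.
  unfold ip, NN, nrm2, ip.
  eapply Rle_trans.
  apply (young_int (fun x => dx3 eta x sg t0) (fun x => dx3 eta x s t0) 1 0 PI Rlt_0_1).
  left; apply PI_RGT_0.
  intros x. apply (jcont_1 (P := R_UniformSpace) (fun x s => dx3 eta x s t0) sg). apply jc3, ex_c.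
  intros x. apply (jcont_1 (P := R_UniformSpace) (fun x s => dx3 eta x s t0) s). apply jc3, ex_c.
  right. field.
Qed.

Lemma PP_bound a s : 0 < a -> 0 <= s -> PP s <= (a * Th + PI ^ 2 * NN s / a) / 2.
Proof.
  intros Ha Hs. eapply Rle_trans. apply Rle_abs. unfold PP, Th, NN, nrm2, ip.
  eapply Rle_trans.
  apply (young_int (fun x => theta x t0) (fun x => eta x s t0) a 0 PI Ha).
  left; apply PI_RGT_0.
  intros x. apply (jcont_1 (P := R_UniformSpace) (fun x (_ : R) => theta x t0) 0). apply jc2, th_c.
  intros x. apply (jcont_1 (P := R_UniformSpace) (fun x s => eta x s t0) s). apply jc3, e_c.
  assert (Hp : RInt (fun x => eta x s t0 * eta x s t0) 0 PI <= PI ^ 2 * RInt (fun x => dx3 eta x s t0 * dx3 eta x s t0) 0 PI).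
  { apply (poincare (fun x => eta x s t0) (fun x => dx3 eta x s t0)).
    intros x. apply Derive_correct. apply e_dx.
    intros x. apply (jcont_1 (P := R_UniformSpace) (fun x s => dx3 eta x s t0) s). apply jc3, ex_c.
    apply (bc_eta s t0 Hs Ht0). }
  assert (RInt (fun x => eta x s t0 * eta x s t0) 0 PI / a <= PI ^ 2 * RInt (fun x => dx3 eta x s t0 * dx3 eta x s t0) 0 PI / a).
  { unfold Rdiv. apply Rmult_le_compat_r. left; apply Rinv_0_lt_compat; lra. exact Hp. }
  lra.
Qed.

Lemma PP_abs : exists A0, 0 <= A0 /\ forall Y, 0 <= Y -> Rabs (PP Y) <= A0 * (1 + Y).
Proof.
  destruct e_bounds as [B [HB0 HB]].
  set (A := RInt (fun x => Rabs (theta x t0)) 0 PI).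
  assert (HAe : ex_RInt (fun x => Rabs (theta x t0)) 0 PI).
  { apply (jcont_ex_RInt (P := R_UniformSpace) (fun x (_ : R) => Rabs (theta x t0)) 0). apply jcont_abs. apply jc2, th_c. }
  assert (HA0 : 0 <= A) by (apply RInt_ge_0; [left; apply PI_RGT_0| exact HAe| intros; apply Rabs_pos]).
  exists (B * A). split. apply Rmult_le_pos; auto.
  intros Y HY. unfold PP.
  eapply Rle_trans. apply (RInt_abs_le _ (fun x => B * (1 + Y) * Rabs (theta x t0))).
  left; apply PI_RGT_0.
  apply (jcont_ex_RInt (P := R_UniformSpace) (fun x s => theta x t0 * eta x s t0) Y). exact jc_PP.
  apply ex_RInt_scalR. exact HAe.
  intros x Hx. destruct (HB x Y t0 Hx HY ltac:(lra)) as [H1 _]. rewrite Rabs_mult.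
  pose proof (Rabs_pos (theta x t0)). rewrite (Rmult_comm (B * (1 + Y))). apply Rmult_le_compat_l; lra.
  rewrite RInt_scalR by exact HAe. fold A. right; ring.
Qed.

Lemma Rw_bound s : 0 <= s -> - Rw s <= normV2 kappa eta t0 / 2 + NN s / 2 * g0 kappa.
Proof.
  intros Hs. destruct (Q_main s Hs) as [_ HQ].
  apply (IG_le (fun sg => kappa sg * ip (fun x => dx3 eta x sg t0) (fun x => dx3 eta x s t0))
     (fun sg => / 2 * (kappa sg * NN sg) + NN s / 2 * kappa sg)).
  - intros sg Hsg. pose proof (k_pos kappa delta HK sg Hsg). pose proof (ip_bound sg s).
    replace (/ 2 * (kappa sg * NN sg) + NN s / 2 * kappa sg) with (kappa sg * ((NN sg + NN s) / 2)) by field.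
    apply Rmult_le_compat_l; lra.
  - exact HQ.
  - replace (normV2 kappa eta t0 / 2 + NN s / 2 * g0 kappa) with (/ 2 * normV2 kappa eta t0 + NN s / 2 * g0 kappa) by field.
    apply IG_plus; apply IG_scal. apply IG_V. apply (IG_k kappa delta HK).
Qed.

Section Ineq.
Variables (a bb : R).
Hypothesis Ha : 0 < a.
Hypothesis Hbb : 0 < bb.

Definition al1 := - (Rabs beta * bb / 2) * Ph - normV2 kappa eta t0 / 2 + c * Th.
Definition al2 := - (Rabs beta / (2 * bb)) - g0 kappa / 2.
Definition al3 := c * a * Th / 2.
Definition al4 := c * PI ^ 2 / (2 * a).

Lemma Th_nonneg : 0 <= Th.
Proof.
  unfold Th, nrm2, ip. apply RInt_ge_0. left; apply PI_RGT_0.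
  apply (jcont_ex_RInt (P := R_UniformSpace) (fun x (_ : R) => theta x t0 * theta x t0) 0). apply jcont_mult; apply jc2, th_c.
  intros x _. pose proof (Rle_0_sqr (theta x t0)); unfold Rsqr in *; lra.
Qed.

Lemma pt_lower s : 0 < s ->
  al1 * kappa s + al2 * (kappa s * NN s) <= c * hd s t0 + c * (kappa s * Pd s).
Proof.
  intros Hs. rewrite pt_identity by exact Hs.
  pose proof (k_pos kappa delta HK s ltac:(lra)) as Hk.
  pose proof (EE_bound bb s Hbb) as HE. pose proof (Rw_bound s ltac:(lra)) as HR.
  assert (HbE : - (Rabs beta * ((bb * Ph + NN s / bb) / 2)) <= beta * EE s).
  { assert (Rabs (beta * EE s) <= Rabs beta * ((bb * Ph + NN s / bb) / 2)).
    { rewrite Rabs_mult. apply Rmult_le_compat_l. apply Rabs_pos. exact HE. }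
    pose proof (Rle_abs (- (beta * EE s))) as Hx. rewrite Rabs_Ropp in Hx. lra. }
  unfold al1, al2.
  replace ((- (Rabs beta * bb / 2) * Ph - normV2 kappa eta t0 / 2 + c * Th) * kappa s +
     (- (Rabs beta / (2 * bb)) - g0 kappa / 2) * (kappa s * NN s))
    with (kappa s * (- (Rabs beta * ((bb * Ph + NN s / bb) / 2)) - (normV2 kappa eta t0 / 2 + NN s / 2 * g0 kappa) + c * Th))
    by (field; lra).
  apply Rmult_le_compat_l. lra. lra.
Qed.

Lemma ex_hd Y : 0 <= Y -> ex_RInt (fun s => hd s t0) 0 Y.
Proof.
  intros HY. apply ex_RInt_contR. intros z Hz. rewrite Rmin_left in Hz by lra.
  apply (c2d_snd (fun u v => hd v u)). apply hd_cont. lra.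
Qed.

Lemma ex_kd_f (f : R -> R) Y : 0 <= Y -> (forall s, continuous f s) -> ex_RInt (fun s => Derive kappa s * f s) 0 Y.
Proof.
  intros Hb Hf. apply ex_RInt_contR. intros z Hz. rewrite Rmin_left in Hz by lra.
  apply cont_mulR. apply (k_dcont kappa delta HK). lra. apply Hf.
Qed.

Lemma int_ineq Y : 0 <= Y ->
  al1 * RInt kappa 0 Y + al2 * RInt (fun s => kappa s * NN s) 0 Y - al3 * kappa 0
  + al4 * RInt (fun s => Derive kappa s * NN s) 0 Y - c * (kappa Y * PP Y)
  <= c * RInt (fun s => hd s t0) 0 Y.
Proof.
  intros HY.
  assert (eK : ex_RInt kappa 0 Y) by (apply (ex_k kappa delta HK); auto).
  assert (eKN : ex_RInt (fun s => kappa s * NN s) 0 Y) by (apply ex_k_f; auto; apply NN_cont).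
  assert (eKdN : ex_RInt (fun s => Derive kappa s * NN s) 0 Y) by (apply ex_kd_f; auto; apply NN_cont).
  assert (eHd : ex_RInt (fun s => hd s t0) 0 Y) by (apply ex_hd; auto).
  assert (eKPd : ex_RInt (fun s => kappa s * Pd s) 0 Y) by (apply ex_k_f; auto; apply Pd_cont).
  assert (eKdPP : ex_RInt (fun s => Derive kappa s * PP s) 0 Y) by (apply ex_kd_f; auto; apply PP_cont).
  assert (eKd : ex_RInt (Derive kappa) 0 Y).
  { apply (ex_RInt_ext (fun s => Derive kappa s * 1)). intros; apply Rmult_1_r. apply ex_kd_f; auto. intros; apply cont_constR. }
  assert (H1 : al1 * RInt kappa 0 Y + al2 * RInt (fun s => kappa s * NN s) 0 Y
               <= c * RInt (fun s => hd s t0) 0 Y + c * RInt (fun s => kappa s * Pd s) 0 Y).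
  { rewrite <- (RInt_scalR kappa), <- (RInt_scalR (fun s => kappa s * NN s)), <- RInt_plusR; auto.
    rewrite <- (RInt_scalR (fun s => hd s t0)), <- (RInt_scalR (fun s => kappa s * Pd s)), <- RInt_plusR; auto.
    apply RInt_le. exact HY.
    apply ex_RInt_plusR; apply ex_RInt_scalR; auto.
    apply ex_RInt_plusR; apply ex_RInt_scalR; auto.
    intros x Hx. apply pt_lower. lra.
    apply ex_RInt_scalR; auto. apply ex_RInt_scalR; auto.
    apply ex_RInt_scalR; auto. apply ex_RInt_scalR; auto. }
  assert (H2 : RInt (fun s => Derive kappa s * PP s) 0 Y + RInt (fun s => kappa s * Pd s) 0 Y = kappa Y * PP Y).
  { rewrite <- RInt_plusR; auto. apply ibp_s. exact HY. }
  assert (H3 : a * Th / 2 * RInt (Derive kappa) 0 Y + PI ^ 2 / (2 * a) * RInt (fun s => Derive kappa s * NN s) 0 Y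
               <= RInt (fun s => Derive kappa s * PP s) 0 Y).
  { rewrite <- (RInt_scalR (Derive kappa)), <- (RInt_scalR (fun s => Derive kappa s * NN s)), <- RInt_plusR; auto.
    apply RInt_le. exact HY.
    apply ex_RInt_plusR; apply ex_RInt_scalR; auto. exact eKdPP.
    intros x Hx. pose proof (k_dneg kappa delta HK x ltac:(lra)). pose proof (PP_bound a x Ha ltac:(lra)).
    replace (a * Th / 2 * Derive kappa x + PI ^ 2 / (2 * a) * (Derive kappa x * NN x))
      with (Derive kappa x * ((a * Th + PI ^ 2 * NN x / a) / 2)) by (field; lra).
    apply Rmult_le_compat_neg_l; lra.
    apply ex_RInt_scalR; auto. apply ex_RInt_scalR; auto. }
  assert (H4 : RInt (Derive kappa) 0 Y = kappa Y - kappa 0) by (apply RInt_kd; auto).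
  assert (H5 : 0 <= al3 * kappa Y).
  { unfold al3. pose proof Th_nonneg. pose proof (k_pos kappa delta HK Y HY).
    unfold Rdiv. repeat apply Rmult_le_pos; lra. }
  assert (H3c : c * (a * Th / 2 * RInt (Derive kappa) 0 Y + PI ^ 2 / (2 * a) * RInt (fun s => Derive kappa s * NN s) 0 Y)
               <= c * RInt (fun s => Derive kappa s * PP s) 0 Y) by (apply Rmult_le_compat_l; lra).
  assert (E3 : c * (a * Th / 2 * RInt (Derive kappa) 0 Y + PI ^ 2 / (2 * a) * RInt (fun s => Derive kappa s * NN s) 0 Y)
     = al3 * kappa Y - al3 * kappa 0 + al4 * RInt (fun s => Derive kappa s * NN s) 0 Y).
  { rewrite H4. unfold al3, al4. field. lra. }
  assert (H2c : c * RInt (fun s => Derive kappa s * PP s) 0 Y + c * RInt (fun s => kappa s * Pd s) 0 Y = c * (kappa Y * PP Y)).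
  { rewrite <- H2. ring. }
  lra.
Qed.

Lemma IG_hd : IG (fun s => hd s t0) (Iinf (fun s => hd s t0)).
Proof.
  destruct hh_bound as [G [HG0 HG]].
  destruct (IG_kp1 kappa delta HK) as [l1 Hl1].
  apply (IG_dom' _ (fun s => G * kp kappa 1 s) (G * l1)).
  - intros; apply ex_hd; auto.
  - intros; apply ex_RInt_scalR; apply (ex_kp kappa delta HK); auto.
  - intros s Hs. apply (HG s t0 Hs). lra.
  - apply IG_scal. exact Hl1.
Qed.

Lemma limit_ineq :
  al1 * g0 kappa + al2 * normV2 kappa eta t0 - al3 * kappa 0 + al4 * Kq <= c * Iinf (fun s => hd s t0).
Proof.
  destruct PP_abs as [A0 [HA0 HA]].
  apply (lim_le (fun Y => al1 * RInt kappa 0 Y + al2 * RInt (fun s => kappa s * NN s) 0 Y - al3 * kappa 0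
      + al4 * RInt (fun s => Derive kappa s * NN s) 0 Y - c * (kappa Y * PP Y))
      (fun Y => c * RInt (fun s => hd s t0) 0 Y)).
  - replace (al1 * g0 kappa + al2 * normV2 kappa eta t0 - al3 * kappa 0 + al4 * Kq)
      with (al1 * g0 kappa + al2 * normV2 kappa eta t0 - al3 * kappa 0 + al4 * Kq - 0) by ring.
    apply lim_minus. apply lim_plus. apply lim_minus. apply lim_plus.
    apply lim_scal. apply IG_to_lim. apply (IG_k kappa delta HK).
    apply lim_scal. apply IG_to_lim. apply IG_V.
    apply lim_const.
    apply lim_scal. apply IG_to_lim. apply IG_K.
    apply (lim_squeeze0 _ (fun Y => kappa Y * (1 + Y)) (c * A0)). apply (k_tail kappa delta HK).
    generalize (pinf_ge 0). apply filter_imp. intros Y HY.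
    pose proof (k_pos kappa delta HK Y HY). specialize (HA Y HY).
    rewrite (Rabs_right (kappa Y * (1 + Y))) by nra.
    rewrite Rabs_mult, Rabs_mult, (Rabs_right c) by lra. rewrite (Rabs_right (kappa Y)) by lra.
    replace (c * A0 * (kappa Y * (1 + Y))) with (c * (kappa Y * (A0 * (1 + Y)))) by ring.
    apply Rmult_le_compat_l. lra. apply Rmult_le_compat_l. lra. exact HA.
  - apply lim_scal. apply IG_to_lim. apply IG_hd.
  - generalize (pinf_ge 0). apply filter_imp. intros Y HY. apply int_ineq. exact HY.
Qed.

End Ineq.

Definition Mdef := 3 / delta + beta ^ 2 / (g0 kappa * delta) + 2 * c * PI ^ 2 * kappa 0 / (g0 kappa) ^ 2.

Lemma main_ineq eps1 : 0 < eps1 -> beta <> 0 ->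
  ex_derive (F1 c kappa theta eta) t0 /\
  Derive (F1 c kappa theta eta) t0 <=
    - c * nrm2 (fun x => theta x t0) - normV2 kappa eta t0 + eps1 * nrm2 (fun x => dt phi x t0)
    - Mdef * (1 + / eps1) * Iinf (fun s => Derive kappa s * nrm2 (fun x => dx3 eta x s t0)).
Proof.
  intros He Hb.
  pose proof (g0_pos kappa delta HK) as Hg. change (g0' kappa) with (g0 kappa) in Hg.
  pose proof (k_pos kappa delta HK 0 ltac:(lra)) as Hk0.
  pose proof (k_delta kappa delta HK) as Hd.
  assert (Hab : 0 < Rabs beta) by (apply Rabs_pos_lt; exact Hb).
  set (a := g0 kappa / (2 * kappa 0)).
  set (bb := eps1 / Rabs beta).
  assert (Ha : 0 < a) by (unfold a; apply Rdiv_lt_0_compat; lra).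
  assert (Hbb : 0 < bb) by (unfold bb; apply Rdiv_lt_0_compat; lra).
  pose proof (limit_ineq a bb Ha Hbb) as HL.
  pose proof F1_deriv as HF.
  split. eexists; exact HF.
  rewrite (is_derive_unique _ _ _ HF).
  fold Th Ph Kq. fold (NN 0).
  change (Iinf (fun s => Derive kappa s * nrm2 (fun x => dx3 eta x s t0))) with Kq.
  set (D := Iinf (fun s => hd s t0)) in *.
  set (V := normV2 kappa eta t0) in *.
  pose proof Th_nonneg as HTh. pose proof K_nonpos as HK0. pose proof V_K as HVK. pose proof V_nonneg as HV0.
  fold V in HVK, HV0.
  set (g := g0 kappa) in *. set (k0 := kappa 0) in *.
  assert (Hbeta2 : Rabs beta * Rabs beta = beta ^ 2) by (rewrite <- Rabs_mult; simpl; rewrite Rmult_1_r; apply Rabs_right; nra).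
  assert (SA : - (2 * c / g) * D <= - (2 / g) * (al1 bb * g + al2 bb * V - al3 a * k0 + al4 a * Kq)).
  { replace (- (2 * c / g) * D) with (- (2 / g) * (c * D)) by (field; lra).
    apply Rmult_le_compat_neg_l. assert (0 < 2 / g) by (apply Rdiv_lt_0_compat; lra). lra. exact HL. }
  set (p := beta ^ 2 / (eps1 * g)).
  set (q := 2 * c * PI ^ 2 * k0 / g ^ 2).
  assert (Hp : 0 <= p).
  { unfold p, Rdiv. apply Rmult_le_pos. apply pow2_ge_0. left; apply Rinv_0_lt_compat. nra. }
  assert (Hq : 0 <= q).
  { pose proof PI_RGT_0. assert (0 <= PI ^ 2) by (apply pow_le; lra).
    assert (0 <= 2 * c * PI ^ 2) by (apply Rmult_le_pos; lra).
    assert (0 <= 2 * c * PI ^ 2 * k0) by (apply Rmult_le_pos; lra).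
    unfold q. apply Rdiv_le_0_compat. lra. apply pow_lt; lra. }
  assert (SB : - (2 / g) * (al1 bb * g + al2 bb * V - al3 a * k0 + al4 a * Kq)
               = eps1 * Ph - 3 / 2 * c * Th + (2 + p) * V - q * Kq).
  { unfold al1, al2, al3, al4, a, bb, p, q. fold V g k0.
    replace (Rabs beta * (eps1 / Rabs beta) / 2) with (eps1 / 2) by (field; lra).
    replace (Rabs beta / (2 * (eps1 / Rabs beta))) with (Rabs beta * Rabs beta / (2 * eps1)) by (field; lra).
    rewrite Hbeta2. field. lra. }
  assert (SC1 : (3 + p) * V <= - ((3 + p) / delta) * Kq).
  { assert (V <= - Kq / delta).
    { apply Rmult_le_reg_l with delta. lra. replace (delta * (- Kq / delta)) with (- Kq) by (field; lra). lra. }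
    replace (- ((3 + p) / delta) * Kq) with ((3 + p) * (- Kq / delta)) by (field; lra).
    apply Rmult_le_compat_l; lra. }
  assert (SC2 : (3 + p) / delta + q <= Mdef * (1 + / eps1)).
  { unfold Mdef. fold g k0. fold q.
    assert (E : beta ^ 2 / (g * delta) * / eps1 = p / delta) by (unfold p; field; lra).
    assert (0 <= 3 / delta * / eps1) by (apply Rmult_le_pos; left; [apply Rdiv_lt_0_compat; lra | apply Rinv_0_lt_compat; lra]).
    assert (0 <= q * / eps1) by (apply Rmult_le_pos; [lra | left; apply Rinv_0_lt_compat; lra]).
    assert (0 <= beta ^ 2 / (g * delta)) by (apply Rdiv_le_0_compat; nra).
    replace ((3 / delta + beta ^ 2 / (g * delta) + q) * (1 + / eps1))
      with (3 / delta + beta ^ 2 / (g * delta) + q + 3 / delta * / eps1 + beta ^ 2 / (g * delta) * / eps1 + q * / eps1) by ring.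
    rewrite E. replace ((3 + p) / delta) with (3 / delta + p / delta) by (field; lra). lra. }
  assert (SC3 : Mdef * (1 + / eps1) * Kq <= ((3 + p) / delta + q) * Kq).
  { rewrite (Rmult_comm (Mdef * (1 + / eps1))), (Rmult_comm ((3 + p) / delta + q)). apply Rmult_le_compat_neg_l; lra. }
  assert (SC4 : ((3 + p) / delta + q) * Kq = (3 + p) / delta * Kq + q * Kq) by ring.
  assert (0 <= c * Th) by (apply Rmult_le_pos; lra).
  rewrite SB in SA.
  fold V. lra.
Qed.

End Sol.


Theorem lemma5 (rho J c mu b alpha xi beta delta : R) (kappa : R -> R) :
  0 < rho -> 0 < J -> 0 < c -> 0 < mu -> 0 < b -> 0 < alpha -> 0 < xi ->
  mu * xi > b ^ 2 -> beta <> 0 ->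
  kernel_hyp kappa delta ->
  exists M : R, 0 < M /\
    forall (u phi theta : R -> R -> R) (eta : R -> R -> R -> R),
      is_solution rho J c mu b alpha xi beta kappa u phi theta eta ->
      forall eps1 : R, 0 < eps1 ->
      forall t : R, 0 < t ->
        ex_derive (F1 c kappa theta eta) t /\
        Derive (F1 c kappa theta eta) t <=
          - c * nrm2 (fun x => theta x t)
          - normV2 kappa eta t
          + eps1 * nrm2 (fun x => dt phi x t)
          - M * (1 + / eps1) *
              Iinf (fun s => Derive kappa s * nrm2 (fun x => dx3 eta x s t)).
Proof.
  intros Hrho HJ Hc Hmu Hb Halpha Hxi Hmx Hbeta HK.
  exists (Mdef c beta delta kappa). split.
  - unfold Mdef. pose proof (g0_pos kappa delta HK) as Hg. change (g0' kappa) with (g0 kappa) in Hg.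
    pose proof (k_pos kappa delta HK 0 ltac:(lra)) as Hk0. pose proof (k_delta kappa delta HK) as Hd.
    pose proof PI_RGT_0.
    assert (0 < 3 / delta) by (apply Rdiv_lt_0_compat; lra).
    assert (0 <= beta ^ 2 / (g0 kappa * delta)) by (apply Rdiv_le_0_compat; [apply pow2_ge_0 | apply Rmult_lt_0_compat; lra]).
    assert (0 <= PI ^ 2) by (apply pow_le; lra).
    assert (0 <= 2 * c * PI ^ 2) by (apply Rmult_le_pos; lra).
    assert (0 <= 2 * c * PI ^ 2 * kappa 0) by (apply Rmult_le_pos; lra).
    assert (0 <= 2 * c * PI ^ 2 * kappa 0 / g0 kappa ^ 2) by (apply Rdiv_le_0_compat; [lra | apply pow_lt; lra]).
    lra.
  - intros u phi theta eta Hsol eps1 He t Ht.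
    exact (main_ineq rho J c mu b alpha xi beta delta kappa u phi theta eta Hc HK Hsol t Ht eps1 He Hbeta).
Qed.
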